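(* Let $L'=\{E,H,\leq\}$ where $E$ is binary, $H$ is ternary and $\leq$ is binary. Let $\mathbf F$ be the $\{E,H\}$-structure with vertex set $\{0,1,2,3\}$, $E^{\mathbf F}=\{(1,0),(1,2),(1,3)\}$ and $H^{\mathbf F}=\{(0,2,3)\}$, and let $\mathbf F'$ be its expansion to an $L'$-structure by the natural order of vertices. Let $\mathcal K$ be the class of all enumerated $L'$-structures $\mathbf A$ for which there is no monomorphism $\mathbf F\to\mathbf A$. Then $\mathcal K$ does not have the type-respecting amalgamation property.
   Context: A monomorphism is an injective map preserving the relations $E$ and $H$ (not necessarily reflecting them). In all $L'$-structures $\leq$ is a linear order, finite or of type $\omega$; an enumerated structure has underlying set an ordinal $|A|$ ordered by $\leq$; embeddings are monotone, injective, and preserve and reflect all relations. $\mathbf A({<}v)$ is the substructure on $\{a<v\}$ (an initial segment). Weak types: $L'^f$ is $L'$ plus a unary partial function $f$. An $L'^f$-structure $\mathbf T$ is a weak type of level $\ell$ if $T=\{0,\dots,\ell-1,t_0,t_1,\dots\}$; every tuple in every relation $R^{\mathbf T}$, $R\in L'$, meets $\{t_0,t_1,\dots\}$ in a set $\{t_i:i<k\}$ and meets $\{0,\dots,\ell-1\}$; and $f(t_i)=t_{i-1}$ ($i>0$), $f(t_0)=t_0$, $f$ undefined otherwise. An increasing tuple $(a_0,\dots,a_{k-1})$ of vertices of $A\setminus\ell$ in an enumerated $\mathbf A$ has type $\mathbf T$ on level $\ell$ if the map $h$ (identity on $\ell$, $t_i\mapsto a_i$) satisfies $\vec b\in R^{\mathbf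 T}\iff h(\vec b)\in R^{\mathbf A}$ for all $R\in L'$ and all tuples $\vec b$ from $\{0,\dots,\ell-1,t_0,\dots,t_{k-1}\}$ meeting the type vertices in an initial segment and meeting $\{0,\dots,\ell-1\}$. $\mathbf T$ extends $\mathbf A$ if $\mathbf T$ minus its type vertices is $\mathbf A$; $\mathbf T,\mathbf T'$ agree as $n$-types if they coincide on $A\cup\{t_0,\dots,t_{n-1}\}$. For finite enumerated $\mathbf A$, $\mathbf A^+$ is the disjoint union of all weak types extending $\mathbf A$, with all copies of $\mathbf A$ identified and the copies of $t_i$ in $\mathbf T,\mathbf T'$ identified whenever $\mathbf T,\mathbf T'$ agree as $(i+1)$-types. An embedding $h:\mathbf A\to\mathbf B$ is type-respecting if for each $v\in A$ there is an embedding $h^v:\mathbf A({<}v)^+\to\mathbf B({<}h(v))^+$ whose image contains all weak types on level $h(v)$ of tuples of vertices of $h[A]$. For finite enumerated $\mathbf A,\mathbf B$, $h:\mathbf A^+\to\mathbf B^+$ is type-respecting (resp. $\mathcal K$-type-respecting) if for every $\mathbf A'$ (resp. $\mathbf A'\in\mathcal K$) with initial segment $\mathbf A$ there are $\mathbf B'$ (resp. $\mathbf B'\in\mathcal K$) with initial segment $\mathbf B$ and a type-respecting embedding $g:\mathbf A'\to\mathbf B'$ with $g\restriction A=h\restriction A$ and with every weak type in $\mathbf B'$ of level $g(\max A)$ of a tuple of vertices of $g[A']$ lying in $h[A^+]$. A hereditary class $\mathcal K$ of enumerated structures has the type-respecting amalgamation property if for all finite enumerated $\mathbf A,\mathbf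 B,\mathbf B'\in\mathcal K$ with $B'\setminus B=\{\max B'\}$ and $\mathbf B'\restriction B=\mathbf B$, all $\mathcal K$-type-respecting $f:\mathbf A^+\to\mathbf B^+$, $f':\mathbf A^+\to\mathbf B'^+$ and every type-respecting $g:\mathbf B^+\to\mathbf B'^+$ with $g\restriction B=\mathrm{Id}$ and $g\circ f=f'$, there is a $\mathcal K$-type-respecting $g':\mathbf B^+\to\mathbf B'^+$ with $g'\circ f=f'$ and $g'\restriction B=\mathrm{Id}$. *)

(* Defs.v *)
From mathcomp Require Import all_boot.
Set Implicit Arguments. Unset Strict Implicit. Unset Printing Implicit Defensive.

(* The underlying set is an ordinal: {0,...,n-1} (esz = Some n) or     *)
(* omega (esz = None); <= is always the natural order on that set.     *)
(* Relations are only read on the underlying set.                      *)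
Record estr := EStr {
  esz : option nat;
  eE : nat -> nat -> Prop;
  eH : nat -> nat -> nat -> Prop }.

Definition dom (A : estr) (x : nat) : Prop :=
  match esz A with Some n => x < n | None => True end.

Definition relE (A : estr) x y := [/\ dom A x, dom A y & eE A x y].
Definition relH (A : estr) x y z := [/\ dom A x, dom A y, dom A z & eH A x y z].
Definition relL (A : estr) x y := [/\ dom A x, dom A y & x <= y].

Record fstr := FStr {
  fn : nat;
  fE : nat -> nat -> Prop;
  fH : nat -> nat -> nat -> Prop }.

Definition to_estr (A : fstr) : estr := EStr (Some (fn A)) (fE A) (fH A).

Definition initseg (A : estr) (v : nat) : fstr := FStr v (eE A) (eH A).

Definition initseg_of (A : fstr) (A' : estr) : Prop :=
  [/\ forall x, x < fn A -> dom A' x,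
      forall x y, x < fn A -> y < fn A -> (eE A' x y <-> fE A x y) &
      forall x y z, x < fn A -> y < fn A -> z < fn A ->
        (eH A' x y z <-> fH A x y z)].

Definition emb (A B : estr) (h : nat -> nat) : Prop :=
  [/\ forall x, dom A x -> dom B (h x),
      forall x y, dom A x -> dom A y -> h x = h y -> x = y,
      forall x y, dom A x -> dom A y -> (relL A x y <-> relL B (h x) (h y)),
      forall x y, dom A x -> dom A y -> (relE A x y <-> relE B (h x) (h y)) &
      forall x y z, dom A x -> dom A y -> dom A z ->
        (relH A x y z <-> relH B (h x) (h y) (h z))].

(* Weak types.  On level n, a tuple of vertices of {0..n-1, t_0, ...} *)
(* is coded by naturals: a < n is a base vertex, n + i is t_i.          *)
(* adm n vs : vs meets {0..n-1} and meets the type vertices in a       *)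
(* nonempty initial segment {t_i : i < k}.  (Tuples meeting no type    *)
(* vertex are those of the base structure A itself.)                   *)
Definition adm (n : nat) (vs : seq nat) : bool :=
  [&& has (fun x => x < n) vs, has (fun x => n <= x) vs &
      all (fun x => (n <= x) ==> ((x == n) || (x.-1 \in vs))) vs].

(* the (j+1)-type part of a weak type extending a structure of size n: *)
(* its relations on tuples (meeting the type vertices) over            *)
(* {0,...,n-1,t_0,...,t_j}, stored canonically as finite sets of       *)
(* admissible tuples of 'I_(n + j.+1).                                  *)
Definition V (n j : nat) := 'I_(n + j.+1).
Definition rawdata (n j : nat) :=
  ({set V n j * V n j} * {set V n j * V n j} * {set V n j * V n j * V n j})%type.
Definition wadm n j (d : rawdata n j) : bool :=
  [&& [forall p in d.1.1, adm n [:: val p.1; val p.2]],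
      [forall p in d.1.2, adm n [:: val p.1; val p.2]] &
      [forall p in d.2, adm n [:: val p.1.1; val p.1.2; val p.2]]].
Definition wdata (n j : nat) := {d : rawdata n j | wadm d}.

Definition memE n j (w : wdata n j) (x y : nat) : Prop :=
  exists p, p \in (sval w).1.1 /\ val p.1 = x /\ val p.2 = y.
Definition memL n j (w : wdata n j) (x y : nat) : Prop :=
  exists p, p \in (sval w).1.2 /\ val p.1 = x /\ val p.2 = y.
Definition memH n j (w : wdata n j) (x y z : nat) : Prop :=
  exists p, p \in (sval w).2 /\ [/\ val p.1.1 = x, val p.1.2 = y & val p.2 = z].

(* two weak types agree as (i+1)-types: they coincide on               *)
(* A u {t_0,...,t_i}                                                   *)
Definition agree n i j j' (w : wdata n j) (w' : wdata n j') : Prop :=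
  forall x y z, x < n + i.+1 -> y < n + i.+1 -> z < n + i.+1 ->
    [/\ memE w x y <-> memE w' x y,
        memL w x y <-> memL w' x y &
        memH w x y z <-> memH w' x y z].

(* Type vertices of A^+ : the class of t_j in a weak type T is         *)
(* represented canonically by (j, the (j+1)-type part of T).           *)
Definition nodes (n : nat) := {j : nat & wdata n j}.

(* L'^f-structures (f a unary partial function, given by its graph).    *)
Record lfs := LFS {
  car : Type;
  rE : car -> car -> Prop;
  rL : car -> car -> Prop;
  rH : car -> car -> car -> Prop;
  rf : car -> car -> Prop }.
Arguments rE : clear implicits.
Arguments rL : clear implicits.
Arguments rH : clear implicits.
Arguments rf : clear implicits.

Definition lfs_emb (X Y : lfs) (h : car X -> car Y) : Prop :=
  injective h /\
  [/\ forall x y, rE X x y <-> rE Y (h x) (h y),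
      forall x y, rL X x y <-> rL Y (h x) (h y),
      forall x y z, rH X x y z <-> rH Y (h x) (h y) (h z),
      forall x y, rf X x y -> rf Y (h x) (h y) &
      forall x, (exists z, rf Y (h x) z) -> exists y, rf X x y].

Section Plus.
Variable A : fstr.
Local Notation n := (fn A).
Definition pcar := ('I_n + nodes n)%type.

Definition pcode (x : pcar) : nat :=
  match x with inl a => val a | inr N => n + projT1 N end.

(* x is (a copy of) a vertex of the weak type whose (i+1)-type is w *)
Definition belongs i (w : wdata n i) (x : pcar) : Prop :=
  match x with
  | inl _ => True
  | inr N => projT1 N <= i /\ agree (projT1 N) (projT2 N) w
  end.

Definition pE (x y : pcar) : Prop :=
  (exists a b, [/\ x = inl a, y = inl b & fE A (val a) (val b)]) \/
  (exists i (w : wdata n i), [/\ belongs w x, belongs w y & memE w (pcode x) (pcode y)]).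
Definition pL (x y : pcar) : Prop :=
  (exists a b, [/\ x = inl a, y = inl b & val a <= val b]) \/
  (exists i (w : wdata n i), [/\ belongs w x, belongs w y & memL w (pcode x) (pcode y)]).
Definition pH (x y z : pcar) : Prop :=
  (exists a b c, [/\ x = inl a, y = inl b, z = inl c & fH A (val a) (val b) (val c)]) \/
  (exists i (w : wdata n i),
     [/\ belongs w x, belongs w y, belongs w z & memH w (pcode x) (pcode y) (pcode z)]).
(* f(t_0) = t_0, f(t_{i+1}) = t_i, undefined on A *)
Definition pf (x y : pcar) : Prop :=
  match x, y with
  | inr N, inr M =>
      (projT1 N = 0 /\ M = N) \/
      (projT1 N = (projT1 M).+1 /\ agree (projT1 M) (projT2 M) (projT2 N))
  | _, _ => False
  end.

Definition plus : lfs := LFS pE pL pH pf.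
End Plus.

(* Weak type on level l of an increasing tuple as of vertices >= l of X:*)
(* typeNode X l as N  <->  N is the vertex t_j (j < size as) of that    *)
(* weak type, seen as a vertex of X(<l)^+.                              *)
Definition tmap (l : nat) (as_ : seq nat) (u : nat) : nat :=
  if u < l then u else nth 0 as_ (u - l).

Definition typeNode (X : estr) (l : nat) (as_ : seq nat) (N : nodes l) : Prop :=
  projT1 N < size as_ /\
  forall x y z, x < l + (projT1 N).+1 -> y < l + (projT1 N).+1 ->
                z < l + (projT1 N).+1 ->
   [/\ adm l [:: x; y] -> (memE (projT2 N) x y <-> relE X (tmap l as_ x) (tmap l as_ y)),
       adm l [:: x; y] -> (memL (projT2 N) x y <-> relL X (tmap l as_ x) (tmap l as_ y)) &
       adm l [:: x; y; z] -> (memH (projT2 N) x y z <->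
                              relH X (tmap l as_ x) (tmap l as_ y) (tmap l as_ z))].

Arguments typeNode : clear implicits.

Definition tuple_in_image (A X : estr) (g : nat -> nat) (l : nat) (as_ : seq nat) :=
  sorted ltn as_ /\
  forall a, a \in as_ -> l <= a /\ exists x, dom A x /\ g x = a.

Definition type_resp (A B : estr) (h : nat -> nat) : Prop :=
  emb A B h /\
  forall v, dom A v ->
    exists hv : car (plus (initseg A v)) -> car (plus (initseg B (h v))),
      lfs_emb hv /\
      forall as_, tuple_in_image A B h (h v) as_ ->
        forall N : nodes (h v), typeNode B (h v) as_ N -> exists y, hv y = inr N.

(* The weak types of tuples of g[A'] are taken over B, i.e. on level    *)
(* |B|.                                                  *)
Definition Ktype_resp (K : estr -> Prop) (A B : fstr)
    (h : car (plus A) -> car (plus B)) : Prop :=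
  lfs_emb h /\
  forall A' : estr, K A' -> initseg_of A A' ->
    exists (B' : estr) (g : nat -> nat),
      [/\ K B', initseg_of B B', type_resp A' B' g,
          forall a : 'I_(fn A), exists b : 'I_(fn B), h (inl a) = inl b /\ g (val a) = val b &
          forall as_, tuple_in_image A' B' g (fn B) as_ ->
            forall N : nodes (fn B), typeNode B' (fn B) as_ N ->
              exists y, h y = inr N].

Definition fixes_base (B B' : fstr) (g : car (plus B) -> car (plus B')) : Prop :=
  forall b : 'I_(fn B), exists b' : 'I_(fn B'), g (inl b) = inl b' /\ val b' = val b.

Definition tr_amalgamation (K : estr -> Prop) : Prop :=
  forall A B B' : fstr,
    K (to_estr A) -> K (to_estr B) -> K (to_estr B') ->
    fn B' = (fn B).+1 ->
    (forall x y, x < fn B -> y < fn B -> (fE B' x y <-> fE B x y)) ->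
    (forall x y z, x < fn B -> y < fn B -> z < fn B -> (fH B' x y z <-> fH B x y z)) ->
    forall (f : car (plus A) -> car (plus B)) (f' : car (plus A) -> car (plus B'))
           (g : car (plus B) -> car (plus B')),
      Ktype_resp K f -> Ktype_resp K f' ->
      Ktype_resp (fun _ => True) g -> fixes_base g ->
      (forall x, g (f x) = f' x) ->
      exists g' : car (plus B) -> car (plus B'),
        [/\ Ktype_resp K g', forall x, g' (f x) = f' x & fixes_base g'].

Definition FE (x y : nat) : Prop := (x = 1 /\ y = 0) \/ (x = 1 /\ y = 2) \/ (x = 1 /\ y = 3).
Definition FH (x y z : nat) : Prop := x = 0 /\ y = 2 /\ z = 3.

Definition mono_F (A : estr) (m : nat -> nat) : Prop :=
  [/\ forall x, x < 4 -> dom A (m x),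
      forall x y, x < 4 -> y < 4 -> m x = m y -> x = y,
      forall x y, FE x y -> relE A (m x) (m y) &
      forall x y z, FH x y z -> relH A (m x) (m y) (m z)].

Definition Kclass (A : estr) : Prop := ~ exists m, mono_F A m.

(* Main.v *)
From mathcomp Require Import all_boot zify.
From Stdlib Require Import ClassicalEpsilon Eqdep_dec PeanoNat.
Require Import Defs.
Set Implicit Arguments. Unset Strict Implicit. Unset Printing Implicit Defensive.

Definition m2b n j (S : {set V n j * V n j}) (x y : nat) : bool :=
  [exists q in S, (val q.1 == x) && (val q.2 == y)].
Definition m3b n j (S : {set V n j * V n j * V n j}) (x y z : nat) : bool :=
  [exists q in S, [&& val q.1.1 == x, val q.1.2 == y & val q.2 == z]].
Definition Eb n j (w : wdata n j) := m2b (sval w).1.1.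
Definition Lb n j (w : wdata n j) := m2b (sval w).1.2.
Definition Hb n j (w : wdata n j) := m3b (sval w).2.

Lemma memEP n j (w : wdata n j) x y : memE w x y <-> Eb w x y.
Proof.
split.
- by case=> q [qi [<- <-]]; apply/existsP; exists q; rewrite qi !eqxx.
- by case/existsP=> q /and3P[qi /eqP <- /eqP <-]; exists q.
Qed.
Lemma memLP n j (w : wdata n j) x y : memL w x y <-> Lb w x y.
Proof.
split.
- by case=> q [qi [<- <-]]; apply/existsP; exists q; rewrite qi !eqxx.
- by case/existsP=> q /and3P[qi /eqP <- /eqP <-]; exists q.
Qed.
Lemma memHP n j (w : wdata n j) x y z : memH w x y z <-> Hb w x y z.
Proof.
split.
- by case=> q [qi [<- <- <-]]; apply/existsP; exists q; rewrite qi !eqxx.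
- by case/existsP=> q /and4P[qi /eqP <- /eqP <- /eqP <-]; exists q.
Qed.

Lemma Eb_adm n j (w : wdata n j) x y : Eb w x y ->
  [&& x < n + j.+1, y < n + j.+1 & adm n [:: x; y]].
Proof.
case: w => [[[E L] H] hw]; rewrite /Eb /=; move: hw => /and3P[/forallP hE _ _].
case/existsP=> q /and3P[qi /eqP <- /eqP <-].
by have := hE q; rewrite qi /= => ->; rewrite !ltn_ord.
Qed.
Lemma Lb_adm n j (w : wdata n j) x y : Lb w x y ->
  [&& x < n + j.+1, y < n + j.+1 & adm n [:: x; y]].
Proof.
case: w => [[[E L] H] hw]; rewrite /Lb /=; move: hw => /and3P[_ /forallP hE _].
case/existsP=> q /and3P[qi /eqP <- /eqP <-].
by have := hE q; rewrite qi /= => ->; rewrite !ltn_ord.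
Qed.
Lemma Hb_adm n j (w : wdata n j) x y z : Hb w x y z ->
  [&& x < n + j.+1, y < n + j.+1, z < n + j.+1 & adm n [:: x; y; z]].
Proof.
case: w => [[[E L] H] hw]; rewrite /Hb /=; move: hw => /and3P[_ _ /forallP hE].
case/existsP=> q /and4P[qi /eqP <- /eqP <- /eqP <-].
by have := hE q; rewrite qi /= => ->; rewrite !ltn_ord.
Qed.

Lemma in_m2b n j (S : {set V n j * V n j}) q : (q \in S) = m2b S (val q.1) (val q.2).
Proof.
apply/idP/existsP => [qi|[q' /and3P[qi /eqP e1 /eqP e2]]].
  by exists q; rewrite qi !eqxx.
have -> : q = q' by case: q q' e1 e2 qi => [a b] [a' b'] /= /val_inj <- /val_inj <-.
done.
Qed.
Lemma in_m3b n j (S : {set V n j * V n j * V n j}) q :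
  (q \in S) = m3b S (val q.1.1) (val q.1.2) (val q.2).
Proof.
apply/idP/existsP => [qi|[q' /and4P[qi /eqP e1 /eqP e2 /eqP e3]]].
  by exists q; rewrite qi !eqxx.
have -> : q = q' by case: q q' e1 e2 e3 qi => [[a b] c] [[a' b'] c'] /= /val_inj <- /val_inj <- /val_inj <-.
done.
Qed.

Lemma wdata_ext n j (w w' : wdata n j) :
  (forall x y, Eb w x y = Eb w' x y) -> (forall x y, Lb w x y = Lb w' x y) ->
  (forall x y z, Hb w x y z = Hb w' x y z) -> w = w'.
Proof.
move=> hE hL hH; apply: val_inj.
case: w w' hE hL hH => [[[E L] H] ?] [[[E' L'] H'] ?]; rewrite /Eb /Lb /Hb /= => hE hL hH.
congr (_, _, _); apply/setP => q.
- by rewrite !in_m2b.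
- by rewrite !in_m2b.
- by rewrite !in_m3b.
Qed.

Definition mkraw n j (PE PL : nat -> nat -> bool) (PH : nat -> nat -> nat -> bool) : rawdata n j :=
  ([set q : V n j * V n j | adm n [:: val q.1; val q.2] && PE (val q.1) (val q.2)],
   [set q : V n j * V n j | adm n [:: val q.1; val q.2] && PL (val q.1) (val q.2)],
   [set q : V n j * V n j * V n j |
      adm n [:: val q.1.1; val q.1.2; val q.2] && PH (val q.1.1) (val q.1.2) (val q.2)]).
Lemma mkraw_wadm n j PE PL PH : wadm (mkraw n j PE PL PH).
Proof.
apply/and3P; split; apply/forallP => q; apply/implyP; rewrite inE; by case/andP.
Qed.
Definition mkw n j PE PL PH : wdata n j := exist _ (mkraw n j PE PL PH) (mkraw_wadm n j PE PL PH).

Lemma Eb_mkw n j PE PL PH x y :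
  Eb (mkw n j PE PL PH) x y = [&& x < n + j.+1, y < n + j.+1, adm n [:: x; y] & PE x y].
Proof.
apply/existsP/idP => [[q /and3P[]]|/and4P[hx hy ha hp]].
  by rewrite inE => /andP[ha hp] /eqP <- /eqP <-; rewrite !ltn_ord ha hp.
by exists (Ordinal hx, Ordinal hy); rewrite inE /= ha hp !eqxx.
Qed.
Lemma Lb_mkw n j PE PL PH x y :
  Lb (mkw n j PE PL PH) x y = [&& x < n + j.+1, y < n + j.+1, adm n [:: x; y] & PL x y].
Proof.
apply/existsP/idP => [[q /and3P[]]|/and4P[hx hy ha hp]].
  by rewrite inE => /andP[ha hp] /eqP <- /eqP <-; rewrite !ltn_ord ha hp.
by exists (Ordinal hx, Ordinal hy); rewrite inE /= ha hp !eqxx.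
Qed.
Lemma Hb_mkw n j PE PL PH x y z :
  Hb (mkw n j PE PL PH) x y z =
  [&& x < n + j.+1, y < n + j.+1, z < n + j.+1, adm n [:: x; y; z] & PH x y z].
Proof.
apply/existsP/idP => [[q /and4P[]]|/and5P[hx hy hz ha hp]].
  by rewrite inE => /andP[ha hp] /eqP <- /eqP <- /eqP <-; rewrite !ltn_ord ha hp.
by exists (Ordinal hx, Ordinal hy, Ordinal hz); rewrite inE /= ha hp !eqxx.
Qed.

Definition sg p d x := if x < p then x else x + d.
Definition dc p d y : option nat :=
  if y < p then Some y else if y < p + d then None else Some (y - d).
Definition isnew p d y := (p <= y) && (y < p + d).

Lemma dc_sg p d x : dc p d (sg p d x) = Some x.
Proof. rewrite /dc /sg; case: (ltnP x p) => h; first by rewrite h.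
have -> : (x + d < p) = false by lia.
have -> : (x + d < p + d) = false by lia.
by congr Some; lia. Qed.

Lemma dc_some p d y y' : dc p d y = Some y' -> y = sg p d y'.
Proof. rewrite /dc /sg; case: (ltnP y p) => h; first by case=> <-; rewrite h.
case: ifP => // h2 [<-]; case: ifP; lia. Qed.

Lemma dc_none p d y : (dc p d y == None) = isnew p d y.
Proof. rewrite /dc /isnew; case: (ltnP y p) => h1 //=.
by case: ifP. Qed.

Lemma sg_inj p d : injective (sg p d).
Proof. move=> x y; rewrite /sg; case: ifP; case: ifP; lia. Qed.

Lemma sg_leq p d x y : (sg p d x <= sg p d y) = (x <= y).
Proof. rewrite /sg; case: ifP; case: ifP; lia. Qed.

Lemma sg_ltE p d n k x : p <= n -> (sg p d x < n + d + k) = (x < n + k).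
Proof. rewrite /sg; case: ifP; lia. Qed.

Lemma sg_ge p d n x : p <= n -> (n + d <= sg p d x) = (n <= x).
Proof. rewrite /sg; case: ifP; lia. Qed.

Lemma sg_big p d n x : p <= n -> n <= x -> sg p d x = x + d.
Proof. rewrite /sg; case: ifP; lia. Qed.

Lemma sg_small p d x : x < p -> sg p d x = x.
Proof. by rewrite /sg => ->. Qed.

Lemma adm_sg p d n l : p <= n -> adm (n + d) (map (sg p d) l) = adm n l.
Proof.
move=> hp; rewrite /adm has_map all_map.
congr [&& _, _ & _].
- by apply: eq_has => x /=; rewrite -[n + d]addn0 sg_ltE // addn0.
- by rewrite has_map; apply: eq_has => x /=; rewrite sg_ge.
apply: eq_all => x /=.
rewrite sg_ge //; case: (leqP n x) => //= hx.
rewrite (sg_big d hp hx) eqn_add2r; case: eqP => //= hne.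
have -> : (x + d).-1 = sg p d x.-1 by rewrite (@sg_big p d n); lia.
by rewrite mem_map //; apply: sg_inj.
Qed.

Lemma sg_lt p d n m a : n + d = m -> a < n -> sg p d a < m.
Proof. rewrite /sg; case: ifP; lia. Qed.

Lemma adm2_l n x y : x < n -> adm n [:: x; y] -> y = n.
Proof. rewrite /adm /= => hx /and3P[_ + /and3P[_ + _]]; rewrite leqNgt hx /= orbF.
case: (leqP n y) => //= hy _; rewrite !inE; case/or3P => /eqP //; lia. Qed.
Lemma adm2_r n x y : y < n -> adm n [:: x; y] -> x = n.
Proof. rewrite /adm /= => hy /and3P[_ + /and3P[+ _ _]]; rewrite (leqNgt n y) hy /= orbF.
case: (leqP n x) => //= hx _; rewrite !inE; case/or3P => /eqP //; lia. Qed.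

Lemma beqP (b1 b2 : bool) : (b1 <-> b2) <-> b1 = b2.
Proof. split => [[h1 h2]|->//]; apply/idP/idP; [exact: h1|exact: h2]. Qed.

Lemma agreeP n i j j' (w : wdata n j) (w' : wdata n j') :
  agree i w w' <-> forall x y z, x < n + i.+1 -> y < n + i.+1 -> z < n + i.+1 ->
    [/\ Eb w x y = Eb w' x y, Lb w x y = Lb w' x y & Hb w x y z = Hb w' x y z].
Proof.
split=> h x y z hx hy hz; have := h x y z hx hy hz.
- case=> [e1 e2 e3]; split; apply/beqP.
  + by rewrite -!memEP.
  + by rewrite -!memLP.
  + by rewrite -!memHP.
- case=> [e1 e2 e3]; split.
  + by rewrite !memEP e1.
  + by rewrite !memLP e2.
  + by rewrite !memHP e3.
Qed.

Lemma agree_refl n i j (w : wdata n j) : agree i w w.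
Proof. by move=> x y z _ _ _. Qed.

Definition mapw n m p d (cE : nat -> bool) j (w : wdata n j) : wdata m j :=
 mkw m j
  (fun x y => match dc p d x, dc p d y with
     | Some x', Some y' => Eb w x' y'
     | _, _ => [&& isnew p d x, y == m, cE x & Eb w 0 n] end)
  (fun x y => match dc p d x, dc p d y with
     | Some x', Some y' => Lb w x' y'
     | _, _ => isnew p d x && (y == m) end)
  (fun x y z => match dc p d x, dc p d y, dc p d z with
     | Some x', Some y', Some z' => Hb w x' y' z'
     | _, _, _ => false end).

Definition pullw n m p d j (w : wdata m j) : wdata n j :=
  mkw n j (fun x y => Eb w (sg p d x) (sg p d y)) (fun x y => Lb w (sg p d x) (sg p d y))
          (fun x y z => Hb w (sg p d x) (sg p d y) (sg p d z)).

Definition restr n j (w : wdata n j.+1) : wdata n j := mkw n j (Eb w) (Lb w) (Hb w).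

Lemma adm2_sg p d n x y : p <= n -> adm (n + d) [:: sg p d x; sg p d y] = adm n [:: x; y].
Proof. by move=> hp; rewrite -(adm_sg d _ hp). Qed.
Lemma adm3_sg p d n x y z : p <= n ->
  adm (n + d) [:: sg p d x; sg p d y; sg p d z] = adm n [:: x; y; z].
Proof. by move=> hp; rewrite -(adm_sg d _ hp). Qed.

Lemma Eb_map_sg n p d cE j (w : wdata n j) x y : p <= n ->
  Eb (mapw (n + d) p d cE w) (sg p d x) (sg p d y) = Eb w x y.
Proof.
move=> hp; rewrite Eb_mkw !dc_sg; apply/idP/idP; first by case/and4P.
move=> h; have /and3P[hx hy ha] := Eb_adm h.
by rewrite !sg_ltE // adm2_sg // hx hy ha h.
Qed.
Lemma Lb_map_sg n p d cE j (w : wdata n j) x y : p <= n ->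
  Lb (mapw (n + d) p d cE w) (sg p d x) (sg p d y) = Lb w x y.
Proof.
move=> hp; rewrite Lb_mkw !dc_sg; apply/idP/idP; first by case/and4P.
move=> h; have /and3P[hx hy ha] := Lb_adm h.
by rewrite !sg_ltE // adm2_sg // hx hy ha h.
Qed.
Lemma Hb_map_sg n p d cE j (w : wdata n j) x y z : p <= n ->
  Hb (mapw (n + d) p d cE w) (sg p d x) (sg p d y) (sg p d z) = Hb w x y z.
Proof.
move=> hp; rewrite Hb_mkw !dc_sg; apply/idP/idP; first by case/and5P.
move=> h; have /and4P[hx hy hz ha] := Hb_adm h.
by rewrite !sg_ltE // adm3_sg // hx hy hz ha h.
Qed.

Lemma Eb_pull n p d j (w : wdata (n + d) j) x y : p <= n ->
  Eb (pullw n p d w) x y = Eb w (sg p d x) (sg p d y).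
Proof.
move=> hp; rewrite Eb_mkw; apply/idP/idP; first by case/and4P.
move=> h; have /and3P[hx hy ha] := Eb_adm h.
by move: hx hy ha; rewrite !sg_ltE // adm2_sg // => -> -> ->.
Qed.
Lemma Lb_pull n p d j (w : wdata (n + d) j) x y : p <= n ->
  Lb (pullw n p d w) x y = Lb w (sg p d x) (sg p d y).
Proof.
move=> hp; rewrite Lb_mkw; apply/idP/idP; first by case/and4P.
move=> h; have /and3P[hx hy ha] := Lb_adm h.
by move: hx hy ha; rewrite !sg_ltE // adm2_sg // => -> -> ->.
Qed.
Lemma Hb_pull n p d j (w : wdata (n + d) j) x y z : p <= n ->
  Hb (pullw n p d w) x y z = Hb w (sg p d x) (sg p d y) (sg p d z).
Proof.
move=> hp; rewrite Hb_mkw; apply/idP/idP; first by case/and5P.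
move=> h; have /and4P[hx hy hz ha] := Hb_adm h.
by move: hx hy hz ha; rewrite !sg_ltE // adm3_sg // => -> -> -> ->.
Qed.

Lemma agree_restr n k (w : wdata n k.+1) : agree k (restr w) w.
Proof.
apply/agreeP => x y z hx hy hz; rewrite /restr Eb_mkw Lb_mkw Hb_mkw hx hy hz /=.
split.
- by case h: (Eb w x y); rewrite ?andbF ?andbT //; case/and3P: (Eb_adm h).
- by case h: (Lb w x y); rewrite ?andbF ?andbT //; case/and3P: (Lb_adm h).
- by case h: (Hb w x y z); rewrite ?andbF ?andbT //; case/and4P: (Hb_adm h).
Qed.

Lemma dc_lt p d n k x x' : p <= n -> dc p d x = Some x' -> x < n + d + k -> x' < n + k.
Proof. by move=> hp /dc_some ->; rewrite sg_ltE. Qed.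

Lemma agree_map n p d cE i j j' (w : wdata n j) (w' : wdata n j') : p <= n ->
  i <= j -> i <= j' -> agree i w w' ->
  agree i (mapw (n + d) p d cE w) (mapw (n + d) p d cE w').
Proof.
move=> hp hj hj' /agreeP ha; apply/agreeP => x y z hx hy hz.
have bd : forall u, u < n + d + i.+1 -> (u < n + d + j.+1) && (u < n + d + j'.+1).
  by move=> u; lia.
have hb := fun u (hu : u < n + d + i.+1) x' (e : dc p d u = Some x') => dc_lt hp e hu.
have l0 : 0 < n + i.+1 by lia.
have ln : n < n + i.+1 by lia.
have h0 : Eb w 0 n = Eb w' 0 n by case: (ha 0 n 0 l0 ln l0).
rewrite !Eb_mkw !Lb_mkw !Hb_mkw.
case/andP: (bd x hx) => -> ->; case/andP: (bd y hy) => -> ->; case/andP: (bd z hz) => -> -> /=.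
split.
- case ex: (dc p d x) => [x'|]; case ey: (dc p d y) => [y'|] //; try by rewrite h0.
  by case: (ha x' y' 0 (hb _ hx _ ex) (hb _ hy _ ey)) => // -> .
- case ex: (dc p d x) => [x'|]; case ey: (dc p d y) => [y'|] //.
  by case: (ha x' y' 0 (hb _ hx _ ex) (hb _ hy _ ey)) => // _ -> .
- case ex: (dc p d x) => [x'|]; case ey: (dc p d y) => [y'|] //;
  case ez: (dc p d z) => [z'|] //.
  by case: (ha x' y' z' (hb _ hx _ ex) (hb _ hy _ ey) (hb _ hz _ ez)) => _ _ ->.
Qed.

Lemma agree_pull n p d cE i j (N : wdata n i) (w' : wdata (n + d) j) : p <= n ->
  agree i (mapw (n + d) p d cE N) w' -> agree i N (pullw n p d w').
Proof.
move=> hp /agreeP ha; apply/agreeP => x y z hx hy hz.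
have s : forall u, u < n + i.+1 -> sg p d u < n + d + i.+1 by move=> u; rewrite sg_ltE.
case: (ha _ _ _ (s _ hx) (s _ hy) (s _ hz)).
rewrite Eb_map_sg // Lb_map_sg // Hb_map_sg // Eb_pull // Lb_pull // Hb_pull //.
Qed.

Lemma Eb_mapG n m p d cE j (w : wdata n j) x y : n + d = m -> p <= n ->
  Eb (mapw m p d cE w) (sg p d x) (sg p d y) = Eb w x y.
Proof. by move=> <-; apply: Eb_map_sg. Qed.
Lemma Lb_mapG n m p d cE j (w : wdata n j) x y : n + d = m -> p <= n ->
  Lb (mapw m p d cE w) (sg p d x) (sg p d y) = Lb w x y.
Proof. by move=> <-; apply: Lb_map_sg. Qed.
Lemma Hb_mapG n m p d cE j (w : wdata n j) x y z : n + d = m -> p <= n ->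
  Hb (mapw m p d cE w) (sg p d x) (sg p d y) (sg p d z) = Hb w x y z.
Proof. by move=> <-; apply: Hb_map_sg. Qed.
Lemma Eb_pullG n m p d j (w : wdata m j) x y : n + d = m -> p <= n ->
  Eb (pullw n p d w) x y = Eb w (sg p d x) (sg p d y).
Proof. by move=> e; subst m; apply: Eb_pull. Qed.
Lemma Lb_pullG n m p d j (w : wdata m j) x y : n + d = m -> p <= n ->
  Lb (pullw n p d w) x y = Lb w (sg p d x) (sg p d y).
Proof. by move=> e; subst m; apply: Lb_pull. Qed.
Lemma Hb_pullG n m p d j (w : wdata m j) x y z : n + d = m -> p <= n ->
  Hb (pullw n p d w) x y z = Hb w (sg p d x) (sg p d y) (sg p d z).
Proof. by move=> e; subst m; apply: Hb_pull. Qed.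
Lemma agree_mapG n m p d cE i j j' (w : wdata n j) (w' : wdata n j') : n + d = m -> p <= n ->
  i <= j -> i <= j' -> agree i w w' ->
  agree i (mapw m p d cE w) (mapw m p d cE w').
Proof. by move=> <-; apply: agree_map. Qed.
Lemma agree_pullG n m p d cE i j (N : wdata n i) (w' : wdata m j) : n + d = m -> p <= n ->
  agree i (mapw m p d cE N) w' -> agree i N (pullw n p d w').
Proof. by move=> e; subst m; apply: agree_pull. Qed.

Definition pmap n m p d (cE : nat -> bool) (hm : n + d = m) (x : 'I_n + nodes n) : 'I_m + nodes m :=
  match x with
  | inl a => inl (Ordinal (@sg_lt p d n m a hm (ltn_ord a)))
  | inr N => inr (existT _ (projT1 N) (mapw m p d cE (projT2 N)))
  end.
Arguments pmap {n m} p d cE hm x.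

Lemma pcode_pmap (X Y : fstr) p d cE (hm : fn X + d = fn Y) (hp : p <= fn X) (x : pcar X) :
  @pcode Y (pmap p d cE hm x) = sg p d (@pcode X x).
Proof. case: x => [a|[k w]] //=; rewrite (@sg_big p d (fn X)) //; [lia|lia]. Qed.

Lemma belongs_map (X Y : fstr) p d cE (hm : fn X + d = fn Y) (hp : p <= fn X) i
   (w : wdata (fn X) i) (x : pcar X) :
  belongs w x -> belongs (mapw (fn Y) p d cE w) (pmap p d cE hm x : pcar Y).
Proof.
case: x => [a|[k N]] //= [hk ha]; split => //.
exact: agree_mapG.
Qed.

Lemma belongs_pull (X Y : fstr) p d cE (hm : fn X + d = fn Y) (hp : p <= fn X) i
   (w : wdata (fn Y) i) (x : pcar X) :
  belongs w (pmap p d cE hm x : pcar Y) -> belongs (pullw (fn X) p d w) x.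
Proof.
case: x => [a|[k N]] //= [hk ha]; split => //.
exact: agree_pullG ha.
Qed.

Lemma pmap_inl_inv n m p d cE (hm : n + d = m) x (a' : 'I_m) :
  pmap p d cE hm x = inl a' -> exists a : 'I_n, x = inl a /\ val a' = sg p d a.
Proof. by case: x => //= a [<-]; exists a. Qed.

Lemma pmap_emb (X Y : fstr) p d (cE : nat -> bool) (hm : fn X + d = fn Y) (hp : p <= fn X)
  (hE : forall a b, a < fn X -> b < fn X -> (fE X a b <-> fE Y (sg p d a) (sg p d b)))
  (hH : forall a b c, a < fn X -> b < fn X -> c < fn X ->
         (fH X a b c <-> fH Y (sg p d a) (sg p d b) (sg p d c))) :
  lfs_emb (pmap p d cE hm : car (plus X) -> car (plus Y)).
Proof.
split.
  move=> [a|[k w]] [b|[k' w']] //=.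
  - case=> e; congr inl; apply: val_inj; apply: (@sg_inj p d); exact: e.
  - move=> e0.
    have e1 := Some_inj (congr1 (fun z : 'I_(fn Y) + nodes (fn Y) => if z is inr N then Some N else None) e0).
    have ek : k = k' := congr1 (@projT1 _ _) e1.
    subst k'; have e := inj_pair2_eq_dec _ Nat.eq_dec _ _ _ _ e1.
    congr (inr (existT _ _ _)).
    apply: wdata_ext => [x y|x y|x y z].
    + by rewrite -(Eb_mapG cE w x y hm hp) e Eb_mapG.
    + by rewrite -(Lb_mapG cE w x y hm hp) e Lb_mapG.
    + by rewrite -(Hb_mapG cE w x y z hm hp) e Hb_mapG.
split.
- move=> x y; split.
  + case=> [[a [b [-> -> h]]]|[i [w [bx bY hw]]]].
      left; do 2 eexists; split; [reflexivity|reflexivity|]; exact/(hE _ _ (ltn_ord a) (ltn_ord b)).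
    right; exists i, (mapw (fn Y) p d cE w); split; try exact: belongs_map.
    by rewrite !pcode_pmap // memEP Eb_mapG // -memEP.
  + case=> [[a' [b' [ex ey h]]]|[i [w [bx bY hw]]]].
      case: (pmap_inl_inv ex) => a [-> ea]; case: (pmap_inl_inv ey) => b [-> eb].
      left; exists a, b; split => //; apply/(hE _ _ (ltn_ord a) (ltn_ord b)); by rewrite -ea -eb.
    right; exists i, (pullw (fn X) p d w); split; [exact: (belongs_pull (cE := cE) (hm := hm) hp bx)|exact: (belongs_pull (cE := cE) (hm := hm) hp bY)|].
    by rewrite memEP (Eb_pullG _ _ _ hm hp) -!(@pcode_pmap X Y p d cE hm hp) -memEP.
- move=> x y; split.
  + case=> [[a [b [-> -> h]]]|[i [w [bx bY hw]]]].
      left; do 2 eexists; split; [reflexivity|reflexivity|]; by rewrite /= sg_leq.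
    right; exists i, (mapw (fn Y) p d cE w); split; try exact: belongs_map.
    by rewrite !pcode_pmap // memLP Lb_mapG // -memLP.
  + case=> [[a' [b' [ex ey h]]]|[i [w [bx bY hw]]]].
      case: (pmap_inl_inv ex) => a [-> ea]; case: (pmap_inl_inv ey) => b [-> eb].
      left; exists a, b; split => //; by rewrite -(sg_leq p d) -ea -eb.
    right; exists i, (pullw (fn X) p d w); split; [exact: (belongs_pull (cE := cE) (hm := hm) hp bx)|exact: (belongs_pull (cE := cE) (hm := hm) hp bY)|].
    by rewrite memLP (Lb_pullG _ _ _ hm hp) -!(@pcode_pmap X Y p d cE hm hp) -memLP.
- move=> x y z; split.
  + case=> [[a [b [c [-> -> -> h]]]]|[i [w [bx bY bz hw]]]].
      left; do 3 eexists; split; [reflexivity|reflexivity|reflexivity|]; exact/(hH _ _ _ (ltn_ord a) (ltn_ord b) (ltn_ord c)).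
    right; exists i, (mapw (fn Y) p d cE w); split; try exact: belongs_map.
    by rewrite !pcode_pmap // memHP Hb_mapG // -memHP.
  + case=> [[a' [b' [c' [ex ey ez h]]]]|[i [w [bx bY bz hw]]]].
      case: (pmap_inl_inv ex) => a [-> ea]; case: (pmap_inl_inv ey) => b [-> eb].
      case: (pmap_inl_inv ez) => c [-> ec].
      left; exists a, b, c; split => //; apply/(hH _ _ _ (ltn_ord a) (ltn_ord b) (ltn_ord c)); by rewrite -ea -eb -ec.
    right; exists i, (pullw (fn X) p d w); split; [exact: (belongs_pull (cE := cE) (hm := hm) hp bx)|exact: (belongs_pull (cE := cE) (hm := hm) hp bY)|exact: (belongs_pull (cE := cE) (hm := hm) hp bz)|].
    by rewrite memHP (Hb_pullG _ _ _ _ hm hp) -!(@pcode_pmap X Y p d cE hm hp) -memHP.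
- move=> [a|[k w]] [b|[k' w']] //=.
  case=> [[hk e]|[hk ha]].
    have ek : k' = k := congr1 (@projT1 _ _) e.
    subst k'; have -> := inj_pair2_eq_dec _ Nat.eq_dec _ _ _ _ e.
    by left.
  right; split => //; apply: agree_mapG => //; lia.
- move=> [a|[k w]] /=.
    by case=> [[b|]].
  move=> _; case: k w => [|k] w.
    by exists (inr (existT _ 0 w)); left.
  exists (inr (existT _ k (restr w))); right; split => //=.
  exact: agree_restr.
Qed.

Lemma Eb_self n j (w : wdata n j) x y :
  [&& x < n + j.+1, y < n + j.+1, adm n [:: x; y] & Eb w x y] = Eb w x y.
Proof. by apply/idP/idP => [/and4P[]//|h]; case/and3P: (Eb_adm h) => -> -> ->. Qed.
Lemma Lb_self n j (w : wdata n j) x y :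
  [&& x < n + j.+1, y < n + j.+1, adm n [:: x; y] & Lb w x y] = Lb w x y.
Proof. by apply/idP/idP => [/and4P[]//|h]; case/and3P: (Lb_adm h) => -> -> ->. Qed.
Lemma Hb_self n j (w : wdata n j) x y z :
  [&& x < n + j.+1, y < n + j.+1, z < n + j.+1, adm n [:: x; y; z] & Hb w x y z] = Hb w x y z.
Proof. by apply/idP/idP => [/and5P[]//|h]; case/and4P: (Hb_adm h) => -> -> -> ->. Qed.

Lemma tmap_lt l as_ u : u < l -> tmap l as_ u = u.
Proof. by rewrite /tmap => ->. Qed.
Lemma tmap_l l as_ : tmap l as_ l = nth 0 as_ 0.
Proof. by rewrite /tmap ltnn subnn. Qed.

Lemma typeNodeE (T : estr) l as_ j (w : wdata l j) x y z :
  typeNode T l as_ (existT _ j w) -> x < l + j.+1 -> y < l + j.+1 -> z < l + j.+1 ->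
  [/\ adm l [:: x; y] -> (Eb w x y <-> relE T (tmap l as_ x) (tmap l as_ y)),
      adm l [:: x; y] -> (Lb w x y <-> relL T (tmap l as_ x) (tmap l as_ y)) &
      adm l [:: x; y; z] -> (Hb w x y z <->
                              relH T (tmap l as_ x) (tmap l as_ y) (tmap l as_ z))].
Proof.
case=> _ h hx hy hz; case: (h x y z hx hy hz) => h1 h2 h3; split.
- by move=> a; rewrite -memEP; apply: h1.
- by move=> a; rewrite -memLP; apply: h2.
- by move=> a; rewrite -memHP; apply: h3.
Qed.

Lemma cover (T : estr) n m p d (cE : nat -> bool) (hm : n + d = m) (hp : p <= n)
  (as_ : seq nat) (N : nodes m) :
  (forall u, isnew p d u -> cE u -> 0 < p) ->
  (forall a, a \in as_ -> m <= a /\ dom T a) ->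
  (forall u, isnew p d u -> dom T u) ->
  (forall u y, isnew p d u -> m <= y -> dom T y -> (relE T u y <-> cE u /\ relE T 0 y)) ->
  (forall u y, isnew p d u -> m <= y -> ~ relE T y u) ->
  (forall x y z, isnew p d x || isnew p d y || isnew p d z -> ~ relH T x y z) ->
  typeNode T m as_ N -> exists y, pmap p d cE hm y = inr N.
Proof.
move=> hc has hdn hrE hrE' hrH.
case: N => j w htn; have [hj _] := htn; simpl in hj.
exists (inr (existT _ j (pullw n p d w))).
congr (inr (existT _ _ _)).
change (mapw m p d cE (pullw n p d w) = w).
have a0in : nth 0 as_ 0 \in as_.
apply: mem_nth; exact: (leq_ltn_trans (leq0n j) hj).
have [ma0 da0] := has _ a0in.
have nlt : forall u, isnew p d u -> u < m by move=> u; rewrite /isnew; lia.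
have ml : m < m + j.+1 by lia.
have l0 : 0 < m + j.+1 by lia.
have sgm : sg p d n = m by rewrite (@sg_big p d n) //; lia.
apply: wdata_ext => [x y|x y|x y z].
- rewrite Eb_mkw.
  case ex: (dc p d x) => [x'|]; case ey: (dc p d y) => [y'|].
  + by rewrite (Eb_pullG _ _ _ hm hp) -(dc_some ex) -(dc_some ey) Eb_self.
  + have ny : isnew p d y by rewrite -dc_none ey.
    have nx : isnew p d x = false by rewrite -dc_none ex.
    rewrite nx !andbF /=; apply/esym/negbTE/negP => h.
    case/and3P: (Eb_adm h) => hx hy ha.
    have ex' := adm2_r (nlt _ ny) ha; subst x.
    have [+ _ _] := typeNodeE (z:=0) htn ml hy l0.
    move=> /(_ ha) [/(_ h)]; rewrite tmap_l tmap_lt ?nlt //.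
    by move=> r _; apply: (hrE' _ _ ny ma0 r).
  + have nx : isnew p d x by rewrite -dc_none ex.
    rewrite nx /=.
    apply/idP/idP.
    * case/and5P => hx hy ha /eqP ey' /andP[cx]; subst y.
      have p0 := hc _ nx cx.
      rewrite (Eb_pullG _ _ _ hm hp) sg_small // sgm => h0.
      have [+ _ _] := typeNodeE (z:=0) htn l0 ml l0.
      have a0m : adm m [:: 0; m] by rewrite /adm /= eqxx; apply/and3P; split => //; lia.
      move=> /(_ a0m) [/(_ h0)]; rewrite tmap_l tmap_lt; last lia.
      move=> r0 _.
      have [+ _ _] := typeNodeE (z:=0) htn hx ml l0.
      move=> /(_ ha) [_]; apply; rewrite tmap_l tmap_lt ?nlt //.
      by apply/hrE => //; case: r0.
    * move=> h; case/and3P: (Eb_adm h) => hx hy ha.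
      have ey' := adm2_l (nlt _ nx) ha; subst y.
      rewrite hx hy ha eqxx /=.
      have [+ _ _] := typeNodeE (z:=0) htn hx ml l0.
      move=> /(_ ha) [/(_ h)]; rewrite tmap_l tmap_lt ?nlt // => r _.
      have [cx r0] := (hrE _ _ nx ma0 da0).1 r.
      rewrite cx /=; have p0 := hc _ nx cx.
      rewrite (Eb_pullG _ _ _ hm hp) sg_small // sgm.
      have [+ _ _] := typeNodeE (z:=0) htn l0 ml l0.
      have a0m : adm m [:: 0; m] by rewrite /adm /= eqxx; apply/and3P; split => //; lia.
      move=> /(_ a0m) [_]; apply; rewrite tmap_l tmap_lt //; lia.
  + have nx : isnew p d x by rewrite -dc_none ex.
    have ny : isnew p d y by rewrite -dc_none ey.
    apply/idP/idP => [/and4P[_ _ ha /and4P[_ /eqP ey' _ _]]|h]; first by have := nlt _ ny; lia.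
    case/and3P: (Eb_adm h) => hx hy ha; have := adm2_l (nlt _ nx) ha; have := nlt _ ny; lia.
- rewrite Lb_mkw.
  case ex: (dc p d x) => [x'|]; case ey: (dc p d y) => [y'|].
  + by rewrite (Lb_pullG _ _ _ hm hp) -(dc_some ex) -(dc_some ey) Lb_self.
  + have ny : isnew p d y by rewrite -dc_none ey.
    have nx : isnew p d x = false by rewrite -dc_none ex.
    rewrite nx /= ?andbF ?andFb; apply/esym/negbTE/negP => h.
    case/and3P: (Lb_adm h) => hx hy ha.
    have ex' := adm2_r (nlt _ ny) ha; subst x.
    have [_ + _] := typeNodeE (z:=0) htn ml hy l0.
    move=> /(_ ha) [/(_ h)]; rewrite tmap_l tmap_lt ?nlt //.
    by case=> _ _; have := nlt _ ny; lia.
  + have nx : isnew p d x by rewrite -dc_none ex.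
    rewrite nx /=.
    apply/idP/idP.
    * case/and4P => hx hy ha /eqP ey'; subst y.
      have [_ + _] := typeNodeE (z:=0) htn hx ml l0.
      move=> /(_ ha) [_]; apply; rewrite tmap_l tmap_lt ?nlt //.
      split => //; [exact: hdn|have := nlt _ nx; lia].
    * move=> h; case/and3P: (Lb_adm h) => hx hy ha.
      have ey' := adm2_l (nlt _ nx) ha; subst y.
      by rewrite hx hy ha eqxx.
  + have nx : isnew p d x by rewrite -dc_none ex.
    have ny : isnew p d y by rewrite -dc_none ey.
    apply/idP/idP => [/and4P[_ _ ha /andP[_ /eqP ey']]|h]; first by have := nlt _ ny; lia.
    case/and3P: (Lb_adm h) => hx hy ha; have := adm2_l (nlt _ nx) ha; have := nlt _ ny; lia.
- rewrite Hb_mkw.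
  case ex: (dc p d x) => [x'|]; case ey: (dc p d y) => [y'|]; case ez: (dc p d z) => [z'|];
    try by rewrite (Hb_pullG _ _ _ _ hm hp) -(dc_some ex) -(dc_some ey) -(dc_some ez) Hb_self.
  all: rewrite ?andbF; case: (boolP (Hb w x y z)) => // h; exfalso; case/and4P: (Hb_adm h) => hx hy hz ha.
  all: have [_ _ /(_ ha) [/(_ h)]] := typeNodeE htn hx hy hz.
  all: have nlt' : forall u, dc p d u = None -> tmap m as_ u = u by
         move=> u /eqP; rewrite dc_none => /nlt /tmap_lt.
  all: rewrite ?(nlt' _ ex) ?(nlt' _ ey) ?(nlt' _ ez).
  all: move=> r _; apply: (hrH _ _ _ _ r); by rewrite -!dc_none ?ex ?ey ?ez /= ?orbT.
Qed.

Definition pb (P : Prop) : bool := if excluded_middle_informative P then true else false.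
Lemma pbP P : pb P <-> P.
Proof. by rewrite /pb; case: excluded_middle_informative. Qed.

Definition typeW (X : estr) l (as_ : seq nat) : wdata l 0 :=
  mkw l 0 (fun x y => pb (relE X (tmap l as_ x) (tmap l as_ y)))
          (fun x y => pb (relL X (tmap l as_ x) (tmap l as_ y)))
          (fun x y z => pb (relH X (tmap l as_ x) (tmap l as_ y) (tmap l as_ z))).

Lemma typeW_node X l as_ : 0 < size as_ -> typeNode X l as_ (existT _ 0 (typeW X l as_)).
Proof.
move=> hs; split => // x y z hx hy hz /=; split => ha.
- by rewrite memEP Eb_mkw hx hy ha /= pbP.
- by rewrite memLP Lb_mkw hx hy ha /= pbP.
- by rewrite memHP Hb_mkw hx hy hz ha /= pbP.
Qed.

Definition extE p d (cE : nat -> bool) (cb : bool) (A : estr) x y : Prop :=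
 match dc p d x, dc p d y with
 | Some x', Some y' => eE A x' y'
 | _, _ => (isnew p d x /\ p + d <= y /\ cE x /\ eE A 0 (y - d)) \/ (cb /\ x = 2 /\ y = 1)
 end.
Definition extH p d (A : estr) x y z : Prop :=
 match dc p d x, dc p d y, dc p d z with
 | Some x', Some y', Some z' => eH A x' y' z'
 | _, _, _ => False end.
Definition ext p d cE cb A := EStr (omap (addn^~ d) (esz A)) (extE p d cE cb A) (extH p d A).

Lemma dom_ext p d (cE : nat -> bool) (cb : bool) A y : (forall x, x < p -> dom A x) ->
  dom (ext p d cE cb A) y <-> match dc p d y with Some y' => dom A y' | None => True end.
Proof.
rewrite /dom /=; case: (esz A) => [k|] /= hA; last by case: dc.
have pk : p <= k by case: p hA => // p' /(_ p' (ltnSn _)).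
rewrite /dc; case: (ltnP y p) => h1; first by split => _; lia.
case: ifP => h2; first by split => _; lia.
by split; lia.
Qed.

Lemma extE_sg p d (cE : nat -> bool) (cb : bool) A x y : extE p d cE cb A (sg p d x) (sg p d y) <-> eE A x y.
Proof. by rewrite /extE !dc_sg. Qed.
Lemma extH_sg p d A x y z : extH p d A (sg p d x) (sg p d y) (sg p d z) <-> eH A x y z.
Proof. by rewrite /extH !dc_sg. Qed.

Lemma ext_dom_sg p d (cE : nat -> bool) (cb : bool) A x : (forall x, x < p -> dom A x) ->
  dom A x -> dom (ext p d cE cb A) (sg p d x).
Proof. by move=> hA hx; apply: (proj2 (@dom_ext p d cE cb A _ hA)); rewrite dc_sg. Qed.

Lemma ext_emb p d (cE : nat -> bool) (cb : bool) A : (forall x, x < p -> dom A x) -> emb A (ext p d cE cb A) (sg p d).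
Proof.
move=> hA; split.
- by move=> x; apply: ext_dom_sg.
- by move=> x y _ _ /sg_inj.
- move=> x y hx hy; rewrite /relL sg_leq; split; case=> *; split => //; exact: ext_dom_sg.
- move=> x y hx hy; split; case=> _ _ c; split => //; try exact: ext_dom_sg.
    exact: (extE_sg p d cE cb A x y).2.
  exact: (extE_sg p d cE cb A x y).1.
- move=> x y z hx hy hz; split; case=> _ _ _ c; split => //; try exact: ext_dom_sg.
    exact: (extH_sg p d A x y z).2.
  exact: (extH_sg p d A x y z).1.
Qed.

Lemma ext_cover p d (cE : nat -> bool) (cb : bool) A n m (hm : n + d = m) (hp : p <= n) as_ N :
  (forall x, x < p -> dom A x) -> (cb -> 3 <= p + d) ->
  (forall u, isnew p d u -> cE u -> 0 < p) ->
  (forall a, a \in as_ -> m <= a /\ dom (ext p d cE cb A) a) ->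
  typeNode (ext p d cE cb A) m as_ N -> exists y, pmap p d cE hm y = inr N.
Proof.
move=> hA hcb hc has; apply: cover => //.
- by move=> u nu; apply: (proj2 (@dom_ext p d cE cb A _ hA)); move: nu; rewrite -dc_none => /eqP ->.
- move=> u y nu my dy; have du : dom (ext p d cE cb A) u.
    by apply: (proj2 (@dom_ext p d cE cb A _ hA)); move: nu; rewrite -dc_none => /eqP ->.
  have nu' := nu; rewrite -dc_none in nu'; move/eqP: nu' => nu'.
  rewrite /relE /= /extE nu'; split.
  + case=> _ _ [[_ [_ [cu e]]]|[cbt [eu ey]]]; last by have := hcb cbt; lia.
    have p0 := hc _ nu cu.
    split => //; split => //.
      by have := @ext_dom_sg p d cE cb A 0 hA (hA 0 p0); rewrite sg_small.
    have -> : dc p d 0 = Some 0 by rewrite /dc p0.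
    have -> : dc p d y = Some (y - d) by rewrite /dc; case: ifP => ?; [exfalso; lia|case: ifP => ?; [exfalso; lia|]].
    done.
  + case=> cu [_ _]; have p0 := hc _ nu cu.
    have -> : dc p d 0 = Some 0 by rewrite /dc p0.
    have -> : dc p d y = Some (y - d) by rewrite /dc; case: ifP => ?; [exfalso; lia|case: ifP => ?; [exfalso; lia|]].
    by move=> e; split => //; left; split => //; split => //; lia.
- move=> u y nu my; have nu' := nu; rewrite -dc_none in nu'; move/eqP: nu' => nu'.
  rewrite /relE /= /extE nu'; case: (dc p d y) => [y'|];
    case=> _ _ [[ny _]|[cbt [ey _]]]; try (have := hcb cbt; lia);
    move: ny nu; rewrite /isnew; lia.
- move=> x y z nx; rewrite /relH /= /extH.
  case ex: (dc p d x) => [x'|]; case ey: (dc p d y) => [y'|]; case ez: (dc p d z) => [z'|];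
    try by case.
  move: nx; rewrite -!dc_none ex ey ez //.
Qed.

Lemma ext_type_resp p d (cE : nat -> bool) (cb : bool) A : (forall x, x < p -> dom A x) -> (cb -> 3 <= p + d) ->
  (forall u, isnew p d u -> cE u -> 0 < p) ->
  type_resp A (ext p d cE cb A) (sg p d).
Proof.
move=> hA hcb hc; split; first exact: ext_emb.
move=> v hv; case: (ltnP v p) => hvp.
- have hm : v + 0 = sg p d v by rewrite sg_small // addn0.
  exists (pmap v 0 cE hm : car (plus (initseg A v)) -> car (plus (initseg (ext p d cE cb A) (sg p d v)))).
  split.
    apply: pmap_emb => //= [a b ha hb|a b c ha hb hc'].
      by rewrite !sg_small // /= /extE /dc (ltn_trans ha hvp) (ltn_trans hb hvp).
    by rewrite !sg_small // /= /extH /dc (ltn_trans ha hvp) (ltn_trans hb hvp) (ltn_trans hc' hvp).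
  move=> as_ [_ has] N htn; apply: (cover (T := ext p d cE cb A)) htn => //;
    try by move=> u; rewrite /isnew; lia.
  move=> a /has [la [x [dx ex]]]; subst a; split => //; exact: (@ext_dom_sg p d cE cb A x hA dx).
- have hm : v + d = sg p d v by rewrite (@sg_big p d v).
  exists (pmap p d cE hm : car (plus (initseg A v)) -> car (plus (initseg (ext p d cE cb A) (sg p d v)))).
  split.
    apply: pmap_emb => //= [a b ha hb|a b c ha hb hc'].
      by rewrite /= /extE !dc_sg.
    by rewrite /= /extH !dc_sg.
  move=> as_ [_ has] N htn; apply: ext_cover htn => //.
  move=> a /has [la [x [dx ex]]]; subst a; split => //; exact: (@ext_dom_sg p d cE cb A x hA dx).
Qed.

Lemma mkmono (A : estr) v0 v1 v2 v3 :
  v0 != v1 -> v0 != v2 -> v0 != v3 -> v1 != v2 -> v1 != v3 -> v2 != v3 ->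
  relE A v1 v0 -> relE A v1 v2 -> relE A v1 v3 -> relH A v0 v2 v3 ->
  exists m, mono_F A m.
Proof.
move=> n01 n02 n03 n12 n13 n23 e10 e12 e13 h.
exists (fun k => nth 0 [:: v0; v1; v2; v3] k); split.
- case: e10 => d1 d0 _; case: e12 => _ d2 _; case: e13 => _ d3 _.
  by case=> [|[|[|[|k]]]].
- move=> x y hx hy; have u : uniq [:: v0; v1; v2; v3].
    by rewrite /= !inE !negb_or n01 n02 n03 n12 n13 n23.
  by move/eqP; rewrite nth_uniq //= => /eqP.
- by move=> x y [[-> ->]|[[-> ->]|[-> ->]]].
- by move=> x y z [-> [-> ->]].
Qed.

Lemma ext_K d (cE : nat -> bool) (cb : bool) A : Kclass A -> dom A 0 -> 0 < d -> Kclass (ext 1 d cE cb A).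
Proof.
move=> KA hA0 hd [m [hdom hinj hE hH]]; apply: KA.
have hA : forall x, x < 1 -> dom A x by case.
have nm : forall i j, i < 4 -> j < 4 -> i != j -> m i != m j.
  by move=> i j hi hj; apply: contra => /eqP /hinj -> //.
case: (hH 0 2 3 (conj erefl (conj erefl erefl))) => d0 d2 d3 /=.
rewrite /extH; case e0: (dc 1 d (m 0)) => [a0|] //; case e2: (dc 1 d (m 2)) => [a2|] //;
  case e3: (dc 1 d (m 3)) => [a3|] // h.
have da : forall k a, dom (ext 1 d cE cb A) (m k) -> dc 1 d (m k) = Some a -> dom A a.
  by move=> k a /(@dom_ext 1 d cE cb A _ hA); case: dc => // ? ? [<-].
have ne : forall i j a b, i < 4 -> j < 4 -> i != j ->
    dc 1 d (m i) = Some a -> dc 1 d (m j) = Some b -> a != b.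
  move=> i j a b hi hj ij /dc_some ei /dc_some ej; apply: contra (nm i j hi hj ij).
  by rewrite ei ej => /eqP ->.
have E1 := hE 1 0 (or_introl (conj erefl erefl)).
have E2 := hE 1 2 (or_intror (or_introl (conj erefl erefl))).
have E3 := hE 1 3 (or_intror (or_intror (conj erefl erefl))).
case e1: (dc 1 d (m 1)) => [a1|].
- apply: (@mkmono A a0 a1 a2 a3 (ne 0 1 _ _ erefl erefl erefl e0 e1) (ne 0 2 _ _ erefl erefl erefl e0 e2)
     (ne 0 3 _ _ erefl erefl erefl e0 e3) (ne 1 2 _ _ erefl erefl erefl e1 e2)
     (ne 1 3 _ _ erefl erefl erefl e1 e3) (ne 2 3 _ _ erefl erefl erefl e2 e3)).
  + case: E1 => /(da _ _) /(_ e1) x1 /(da _ _) /(_ e0) x0; rewrite /= /extE e1 e0 => ?; by split.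
  + case: E2 => /(da _ _) /(_ e1) x1 /(da _ _) /(_ e2) x0; rewrite /= /extE e1 e2 => ?; by split.
  + case: E3 => /(da _ _) /(_ e1) x1 /(da _ _) /(_ e3) x0; rewrite /= /extE e1 e3 => ?; by split.
  + by split => //; [exact: (da _ _ d0 e0)|exact: (da _ _ d2 e2)|exact: (da _ _ d3 e3)].
- have key : forall k a, k < 4 -> 1 != k -> relE (ext 1 d cE cb A) (m 1) (m k) ->
      dc 1 d (m k) = Some a -> 0 < a /\ relE A 0 a.
    move=> k a hk nk [_ dk]; rewrite /= /extE e1 => -[[_ [hmk [_ e]]]|[_ [_ ek]]] ea.
      have hd' : dc 1 d (m k) = Some (m k - d) by rewrite /dc; case: ifP => ?; [exfalso; lia|case: ifP => ?; [exfalso; lia|]].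
      move: (hd'); rewrite ea => -[->]; split; first lia.
      split => //; exact: (da _ _ dk hd').
    have h1 : (1 < 1 + d) = true by lia.
    by move: ea; rewrite ek /dc ltnn h1.
  have [p0 E0] := key 0 a0 erefl erefl E1 e0.
  have [p2 E2'] := key 2 a2 erefl erefl E2 e2.
  have [p3 E3'] := key 3 a3 erefl erefl E3 e3.
  apply: (@mkmono A a0 0 a2 a3 _ (ne 0 2 _ _ erefl erefl erefl e0 e2)
     (ne 0 3 _ _ erefl erefl erefl e0 e3) _ _ (ne 2 3 _ _ erefl erefl erefl e2 e3)); try lia; try done.
  by split => //; [exact: (da _ _ d0 e0)|exact: (da _ _ d2 e2)|exact: (da _ _ d3 e3)].
Qed.

Lemma Kresp_gen (K : estr -> Prop) (X Y : fstr) p d (cE : nat -> bool) (cb : bool)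
  (hm : fn X + d = fn Y) (hp : p <= fn X) :
  lfs_emb (pmap p d cE hm : car (plus X) -> car (plus Y)) ->
  (cb -> 3 <= p + d) -> (forall u, isnew p d u -> cE u -> 0 < p) ->
  (forall A', K A' -> initseg_of X A' -> K (ext p d cE cb A') /\ initseg_of Y (ext p d cE cb A')) ->
  Ktype_resp K (pmap p d cE hm : car (plus X) -> car (plus Y)).
Proof.
move=> he hcb hc hK; split => // A' KA' ini.
have hA : forall x, x < p -> dom A' x by move=> x hx; case: ini => h _ _; apply: h; lia.
case: (hK A' KA' ini) => K1 I1.
exists (ext p d cE cb A'), (sg p d); split => //.
- exact: ext_type_resp.
- by move=> a; eexists; split; reflexivity.
- move=> as_ [_ has] N htn; apply: ext_cover htn => //.
  move=> a /has [la [x [dx ex]]]; subst a; split => //; exact: (@ext_dom_sg p d cE cb A' x hA dx).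
Qed.

Lemma node_rel (X : fstr) (w : wdata (fn X) 0) (io : nat -> pcar X) :
  (forall c, c < fn X -> exists a : 'I_(fn X), io c = inl a /\ val a = c) ->
  io (fn X) = inr (existT _ 0 w) ->
  (forall x y, x < (fn X).+1 -> y < (fn X).+1 -> adm (fn X) [:: x; y] ->
     (pE (io x) (io y) <-> Eb w x y) /\ (pL (io x) (io y) <-> Lb w x y)) /\
  (forall x y z, x < (fn X).+1 -> y < (fn X).+1 -> z < (fn X).+1 -> adm (fn X) [:: x; y; z] ->
     (pH (io x) (io y) (io z) <-> Hb w x y z)).
Proof.
set n := fn X => hb hn.
have pc : forall c, c < n.+1 -> pcode (io c) = c.
  move=> c hc; case: (ltnP c n) => h; first by case: (hb c h) => a [-> <-].
  have -> : c = n by lia.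
  by rewrite hn /= addn0.
have bel : forall c, c < n.+1 -> belongs w (io c).
  move=> c hc; case: (ltnP c n) => h; first by case: (hb c h) => a [-> _].
  have -> : c = n by lia.
  by rewrite hn; split => //; apply: agree_refl.
have bel' : forall i (w' : wdata n i) c, belongs w' (io c) -> c = n -> agree 0 w w'.
  move=> i w' c bc ec; rewrite ec hn in bc; by case: bc.
have nin : forall c a, c = n -> io c <> inl a by move=> c a ->; rewrite hn.
have n1 : n < n + 1 by lia.
have two : forall x y, x < n.+1 -> y < n.+1 -> adm n [:: x; y] -> x = n \/ y = n.
  move=> x y hx hy /and3P[_ + _] /=; rewrite ?orbF; case/orP => ?; lia.
have three : forall x y z, x < n.+1 -> y < n.+1 -> z < n.+1 -> adm n [:: x; y; z] ->
    [\/ x = n, y = n | z = n].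
  move=> x y z hx hy hz /and3P[_ + _] /=; rewrite ?orbF; case/orP => [?|/orP[]?];
    [apply: Or31|apply: Or32|apply: Or33]; lia.
split.
- move=> x y hx hy ha; have bx : x < n + 1 by lia. have bY : y < n + 1 by lia.
  have hxy := two x y hx hy ha.
  split; split.
  + case=> [[a [b [ex ey _]]]|[i [w' [b1 b2 hm]]]].
      by case: hxy => e; [case: (nin _ a e)|case: (nin _ b e)].
    have ag : agree 0 w w' by case: hxy => e; [exact: (bel' _ _ _ b1 e)|exact: (bel' _ _ _ b2 e)].
    move: hm; rewrite !pc // memEP; case: (agreeP 0 w w') => h1 _.
    by case: (h1 ag x y x bx bY bx) => ->.
  + move=> h; right; exists 0, w; split; try exact: bel.
    by rewrite !pc // memEP.
  + case=> [[a [b [ex ey _]]]|[i [w' [b1 b2 hm]]]].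
      by case: hxy => e; [case: (nin _ a e)|case: (nin _ b e)].
    have ag : agree 0 w w' by case: hxy => e; [exact: (bel' _ _ _ b1 e)|exact: (bel' _ _ _ b2 e)].
    move: hm; rewrite !pc // memLP.
    case: (agreeP 0 w w') => h1 _.
    by case: (h1 ag x y x bx bY bx) => _ ->.
  + move=> h; right; exists 0, w; split; try exact: bel.
    by rewrite !pc // memLP.
- move=> x y z hx hy hz ha; have bx : x < n + 1 by lia. have bY : y < n + 1 by lia.
  have bz : z < n + 1 by lia.
  have hxyz := three x y z hx hy hz ha.
  split.
  + case=> [[a [b [c [ex ey ez _]]]]|[i [w' [b1 b2 b3 hm]]]].
      by case: hxyz => e; [case: (nin _ a e)|case: (nin _ b e)|case: (nin _ c e)].
    have ag : agree 0 w w'.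
      by case: hxyz => e; [exact: (bel' _ _ _ b1 e)|exact: (bel' _ _ _ b2 e)|exact: (bel' _ _ _ b3 e)].
    move: hm; rewrite !pc // memHP.
    case: (agreeP 0 w w') => h1 _.
    by case: (h1 ag x y z bx bY bz) => _ _ ->.
  + move=> h; right; exists 0, w; split; try exact: bel.
    by rewrite !pc // memHP.
Qed.

Definition A0 := FStr 1 (fun _ _ => False) (fun _ _ _ => False).
Definition B0 := FStr 2 (fun _ _ => False) (fun _ _ _ => False).
Definition B1 := FStr 3 (fun x y => x = 2 /\ y = 1) (fun _ _ _ => False).
Definition cEf (u : nat) := false.
Definition cEc (u : nat) := u == 2.
Definition fF := (pmap 1 1 cEf (erefl : fn A0 + 1 = fn B0) : car (plus A0) -> car (plus B0)).
Definition fF' := (pmap 1 2 cEc (erefl : fn A0 + 2 = fn B1) : car (plus A0) -> car (plus B1)).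
Definition gG := (pmap 2 1 cEc (erefl : fn B0 + 1 = fn B1) : car (plus B0) -> car (plus B1)).

Lemma extE_small p d (cE : nat -> bool) (cb : bool) A x y : x < p + d -> y < p + d ->
  (extE p d cE cb A x y <-> if (x < p) && (y < p) then eE A x y else cb /\ x = 2 /\ y = 1).
Proof.
move=> hx hy; rewrite /extE /dc.
case: (ltnP x p) => h1; case: (ltnP y p) => h2; rewrite ?hx ?hy /=; try done;
  split; case; try (by case; lia); by move=> *; right.
Qed.

Lemma extH_small p d A x y z : x < p + d -> y < p + d -> z < p + d ->
  (extH p d A x y z <-> if [&& x < p, y < p & z < p] then eH A x y z else False).
Proof.
move=> hx hy hz; rewrite /extH /dc.
by case: (ltnP x p) => h1; case: (ltnP y p) => h2; case: (ltnP z p) => h3; rewrite ?hx ?hy ?hz.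
Qed.

Lemma ini_ext p d (cE : nat -> bool) (cb : bool) A (Y : fstr) : fn Y = p + d ->
  (forall x, x < p -> dom A x) ->
  (forall x y, x < p + d -> y < p + d ->
     ((if (x < p) && (y < p) then eE A x y else cb /\ x = 2 /\ y = 1) <-> fE Y x y)) ->
  (forall x y z, x < p + d -> y < p + d -> z < p + d ->
     ((if [&& x < p, y < p & z < p] then eH A x y z else False) <-> fH Y x y z)) ->
  initseg_of Y (ext p d cE cb A).
Proof.
move=> hY hA hE hH; split; rewrite hY.
- move=> x hx; apply: (proj2 (@dom_ext p d cE cb A x hA)).
  by rewrite /dc; case: ifP => h //; [exact: hA|case: ifP => //; lia].
- move=> x y hx hy; rewrite -hE //; exact: extE_small.
- move=> x y z hx hy hz; rewrite -hH //; exact: extH_small.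
Qed.

Lemma fF_emb : lfs_emb fF.
Proof. by apply: pmap_emb => // *; split. Qed.
Lemma fF'_emb : lfs_emb fF'.
Proof.
apply: pmap_emb => //= a b ha hb.
by rewrite !sg_small //; split => // -[]; lia.
Qed.
Lemma gG_emb : lfs_emb gG.
Proof.
apply: pmap_emb => //= a b ha hb.
by rewrite !sg_small //; split => // -[]; lia.
Qed.

Lemma KA0 : Kclass (to_estr A0).
Proof. by case=> m [_ _ hE _]; case: (hE 1 0 (or_introl (conj erefl erefl))). Qed.
Lemma KB0 : Kclass (to_estr B0).
Proof. by case=> m [_ _ hE _]; case: (hE 1 0 (or_introl (conj erefl erefl))). Qed.
Lemma KB1 : Kclass (to_estr B1).
Proof.
case=> m [_ hinj hE _].
case: (hE 1 0 (or_introl (conj erefl erefl))) => _ _ /= [_ e0].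
case: (hE 1 2 (or_intror (or_introl (conj erefl erefl)))) => _ _ /= [_ e2].
have := hinj 0 2 erefl erefl; rewrite e0 e2 => /(_ erefl); done.
Qed.

Lemma Kf : Ktype_resp Kclass fF.
Proof.
apply: (Kresp_gen (cb := false)) => //; first exact: fF_emb.
move=> A' KA' [hd hE hH]; split; first by apply: ext_K => //; apply: hd.
apply: ini_ext; first done; first by move=> x hx; apply: hd.
- move=> x y hx hy; case: ifP => [/andP[h1 h2]|_].
    have -> : x = 0 by lia.
    have -> : y = 0 by lia.
    exact: (hE 0 0 erefl erefl).
  by split => // -[].
- move=> x y z hx hy hz; case: ifP => [/and3P[h1 h2 h3]|_].
    have -> : x = 0 by lia.
    have -> : y = 0 by lia.
    have -> : z = 0 by lia.
    exact: (hH 0 0 0 erefl erefl erefl).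
  by split.
Qed.

Lemma Kf' : Ktype_resp Kclass fF'.
Proof.
apply: (Kresp_gen (cb := true)) => //; first exact: fF'_emb.
move=> A' KA' [hd hE hH]; split; first by apply: ext_K => //; apply: hd.
apply: ini_ext; first done; first by move=> x hx; apply: hd.
- move=> x y hx hy; case: ifP => [/andP[h1 h2]|_].
    have -> : x = 0 by lia.
    have -> : y = 0 by lia.
    have := hE 0 0 erefl erefl; rewrite /= => ->; by split => // -[].
  by split; case.
- move=> x y z hx hy hz; case: ifP => [/and3P[h1 h2 h3]|_].
    have -> : x = 0 by lia.
    have -> : y = 0 by lia.
    have -> : z = 0 by lia.
    exact: (hH 0 0 0 erefl erefl erefl).
  by split.
Qed.

Lemma Kg : Ktype_resp (fun _ => True) gG.
Proof.
apply: (Kresp_gen (cb := true)) => //; first exact: gG_emb.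

move=> A' _ [hd hE hH]; split => //.
apply: ini_ext; first done; first by move=> x hx; apply: hd.
- move=> x y hx hy; case: ifP => [/andP[h1 h2]|_].
    rewrite (hE x y) //=; split => // -[]; lia.
  by split; case.
- move=> x y z hx hy hz; case: ifP => [/and3P[h1 h2 h3]|_].
    by rewrite (hH x y z).
  by split.
Qed.

Lemma fixg : fixes_base gG.
Proof. by move=> b; eexists; split; [reflexivity|rewrite /= sg_small]. Qed.

Lemma dc_new p d u : isnew p d u -> dc p d u = None.
Proof. by rewrite -dc_none => /eqP. Qed.
Lemma dc_old p d n y : p <= n -> n + d <= y -> dc p d y = Some (y - d).
Proof. move=> hp hy; rewrite /dc; case: ifP => ?; [exfalso; lia|case: ifP => ?; [exfalso; lia|done]]. Qed.
Lemma isnew_lt p d n u : p <= n -> isnew p d u -> u < n + d.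
Proof. rewrite /isnew; lia. Qed.
Lemma adm_um m u : u < m -> adm m [:: u; m].
Proof. move=> hu; rewrite /adm /= eqxx hu leqnn /= orbT andbT; apply/implyP; lia. Qed.

Lemma R1 n m p d (cE : nat -> bool) j (w : wdata n j) u : n + d = m -> p <= n -> isnew p d u ->
  Eb (mapw m p d cE w) u m = cE u && Eb w 0 n.
Proof.
move=> hm hp nu; have um : u < m by rewrite -hm; exact: isnew_lt hp nu.
rewrite Eb_mkw (dc_new nu) nu eqxx adm_um //.
have -> : u < m + j.+1 by lia.
by have -> : m < m + j.+1 by lia.
Qed.
Lemma R2 n m p d (cE : nat -> bool) j (w : wdata n j) u : n + d = m -> p <= n -> isnew p d u ->
  Eb (mapw m p d cE w) m u = false.
Proof.
move=> hm hp nu; rewrite Eb_mkw (dc_new nu) (@dc_old p d n m) ?hm //.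
have -> : isnew p d m = false by rewrite /isnew; lia.
by rewrite !andbF.
Qed.
Lemma R1L n m p d (cE : nat -> bool) j (w : wdata n j) u : n + d = m -> p <= n -> isnew p d u ->
  Lb (mapw m p d cE w) u m = true.
Proof.
move=> hm hp nu; have um : u < m by rewrite -hm; exact: isnew_lt hp nu.
rewrite Lb_mkw (dc_new nu) nu eqxx adm_um //.
have -> : u < m + j.+1 by lia.
by have -> : m < m + j.+1 by lia.
Qed.
Lemma R2L n m p d (cE : nat -> bool) j (w : wdata n j) u : n + d = m -> p <= n -> isnew p d u ->
  Lb (mapw m p d cE w) m u = false.
Proof.
move=> hm hp nu; rewrite Lb_mkw (dc_new nu) (@dc_old p d n m) ?hm //.
have -> : isnew p d m = false by rewrite /isnew; lia.
by rewrite !andbF.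
Qed.
Lemma RH m p d (cE : nat -> bool) n j (w : wdata n j) x y z :
  isnew p d x || isnew p d y || isnew p d z -> Hb (mapw m p d cE w) x y z = false.
Proof.
move=> h; rewrite Hb_mkw.
case ex: (dc p d x) => [x'|]; case ey: (dc p d y) => [y'|]; case ez: (dc p d z) => [z'|];
  rewrite ?andbF //.
by move: h; rewrite -!dc_none ex ey ez.
Qed.

Lemma sgc u : sg 2 1 (sg 1 1 u) = sg 1 2 u.
Proof. rewrite /sg; case: (ltnP u 1) => h; first by rewrite (ltn_trans h). case: ifP; lia. Qed.

Lemma Eb_out n j (w : wdata n j) x y :
  ~~ [&& x < n + j.+1, y < n + j.+1 & adm n [:: x; y]] -> Eb w x y = false.
Proof. by move=> h; case h': (Eb w x y) => //; move: h; rewrite (Eb_adm h'). Qed.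
Lemma Lb_out n j (w : wdata n j) x y :
  ~~ [&& x < n + j.+1, y < n + j.+1 & adm n [:: x; y]] -> Lb w x y = false.
Proof. by move=> h; case h': (Lb w x y) => //; move: h; rewrite (Lb_adm h'). Qed.

Lemma compE (j : nat) (w : wdata 1 j) x y :
  Eb (mapw 3 2 1 cEc (mapw 2 1 1 cEf w)) x y = Eb (mapw 3 1 2 cEc w) x y.
Proof.
set W := mapw 2 1 1 cEf w.
have e3 : 1 + 2 = 3 by []. have e2 : 2 + 1 = 3 by []. have e1 : 1 + 1 = 2 by [].
have l1 : 1 <= 1 by []. have l2 : 2 <= 2 by [].
case ex: (dc 1 2 x) => [x'|]; case ey: (dc 1 2 y) => [y'|];
first by rewrite (dc_some ex) (dc_some ey) (Eb_mapG cEc w x' y' e3 l1) -!sgc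
  (Eb_mapG cEc W _ _ e2 l2) (Eb_mapG cEf w x' y' e1 l1).
all: case: (boolP [&& x < 3 + j.+1, y < 3 + j.+1 & adm 3 [:: x; y]]) => hb.
all: try by rewrite (Eb_out (mapw 3 2 1 cEc W) hb) (Eb_out (mapw 3 1 2 cEc w) hb).
all: move/and3P: hb => [hx hy ha].
* have nY : isnew 1 2 y by rewrite -dc_none ey.
  have ex3 := adm2_r (isnew_lt l1 nY : y < 3) ha; subst x.
  rewrite (R2 _ _ e3 l1 nY).
  move: nY; rewrite /isnew => /andP[h1 h2].
  have [->|->] : y = 1 \/ y = 2 by lia.
    apply: etrans (Eb_mapG cEc W 2 1 e2 l2) _.
    exact: (R2 _ _ e1 l1 (erefl : isnew 1 1 1)).
  exact: (R2 _ _ e2 l2 (erefl : isnew 2 1 2)).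
* have nX : isnew 1 2 x by rewrite -dc_none ex.
  have ey3 := adm2_l (isnew_lt l1 nX : x < 3) ha; subst y.
  rewrite (R1 _ _ e3 l1 nX).
  move: nX; rewrite /isnew => /andP[h1 h2].
  have [->|->] : x = 1 \/ x = 2 by lia.
    apply: etrans (Eb_mapG cEc W 1 2 e2 l2) _.
    exact: (R1 _ _ e1 l1 (erefl : isnew 1 1 1)).
  apply: etrans (R1 _ _ e2 l2 (erefl : isnew 2 1 2)) _.
  congr (_ && _).
  exact: (Eb_mapG cEf w 0 1 e1 l1).
* have nX : isnew 1 2 x by rewrite -dc_none ex.
  have nY : isnew 1 2 y by rewrite -dc_none ey.
  have := adm2_l (isnew_lt l1 nX : x < 3) ha; have := isnew_lt l1 nY; lia.
Qed.

Lemma compL (j : nat) (w : wdata 1 j) x y :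
  Lb (mapw 3 2 1 cEc (mapw 2 1 1 cEf w)) x y = Lb (mapw 3 1 2 cEc w) x y.
Proof.
set W := mapw 2 1 1 cEf w.
have e3 : 1 + 2 = 3 by []. have e2 : 2 + 1 = 3 by []. have e1 : 1 + 1 = 2 by [].
have l1 : 1 <= 1 by []. have l2 : 2 <= 2 by [].
case ex: (dc 1 2 x) => [x'|]; case ey: (dc 1 2 y) => [y'|];
first by rewrite (dc_some ex) (dc_some ey) (Lb_mapG cEc w x' y' e3 l1) -!sgc
  (Lb_mapG cEc W _ _ e2 l2) (Lb_mapG cEf w x' y' e1 l1).
all: case: (boolP [&& x < 3 + j.+1, y < 3 + j.+1 & adm 3 [:: x; y]]) => hb.
all: try by rewrite (Lb_out (mapw 3 2 1 cEc W) hb) (Lb_out (mapw 3 1 2 cEc w) hb).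
all: move/and3P: hb => [hx hy ha].
* have nY : isnew 1 2 y by rewrite -dc_none ey.
  have ex3 := adm2_r (isnew_lt l1 nY : y < 3) ha; subst x.
  rewrite (R2L _ _ e3 l1 nY).
  move: nY; rewrite /isnew => /andP[h1 h2].
  have [->|->] : y = 1 \/ y = 2 by lia.
    apply: etrans (Lb_mapG cEc W 2 1 e2 l2) _.
    exact: (R2L _ _ e1 l1 (erefl : isnew 1 1 1)).
  exact: (R2L _ _ e2 l2 (erefl : isnew 2 1 2)).
* have nX : isnew 1 2 x by rewrite -dc_none ex.
  have ey3 := adm2_l (isnew_lt l1 nX : x < 3) ha; subst y.
  rewrite (R1L _ _ e3 l1 nX).
  move: nX; rewrite /isnew => /andP[h1 h2].
  have [->|->] : x = 1 \/ x = 2 by lia.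
    apply: etrans (Lb_mapG cEc W 1 2 e2 l2) _.
    exact: (R1L _ _ e1 l1 (erefl : isnew 1 1 1)).
  exact: (R1L _ _ e2 l2 (erefl : isnew 2 1 2)).
* have nX : isnew 1 2 x by rewrite -dc_none ex.
  have nY : isnew 1 2 y by rewrite -dc_none ey.
  have := adm2_l (isnew_lt l1 nX : x < 3) ha; have := isnew_lt l1 nY; lia.
Qed.

Lemma Lnew c c'' : dc 1 2 c = None -> dc 2 1 c = Some c'' -> isnew 1 1 c''.
Proof.
move=> h1 h2.
have hc : (c == 1) || (c == 2).
  move: h1; rewrite /dc; case: (ltnP c 1) => // ?; case: ifP => // ? _; apply/orP; lia.
case/orP: hc => /eqP ec; subst c.
  have := (erefl : dc 2 1 1 = Some 1); rewrite h2 => -[->]; exact: erefl.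
by have := (erefl : dc 2 1 2 = None); rewrite h2.
Qed.

Lemma compH (j : nat) (w : wdata 1 j) x y z :
  Hb (mapw 3 2 1 cEc (mapw 2 1 1 cEf w)) x y z = Hb (mapw 3 1 2 cEc w) x y z.
Proof.
set W := mapw 2 1 1 cEf w.
have e3 : 1 + 2 = 3 by []. have e2 : 2 + 1 = 3 by []. have e1 : 1 + 1 = 2 by [].
have l1 : 1 <= 1 by []. have l2 : 2 <= 2 by [].
case ex: (dc 1 2 x) => [x'|]; case ey: (dc 1 2 y) => [y'|]; case ez: (dc 1 2 z) => [z'|];
first by rewrite (dc_some ex) (dc_some ey) (dc_some ez) (Hb_mapG cEc w x' y' z' e3 l1) -!sgc
  (Hb_mapG cEc W _ _ _ e2 l2) (Hb_mapG cEf w x' y' z' e1 l1).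
all: rewrite [RHS]RH; last by rewrite -!dc_none ex ey ez /= ?orbT.
all: case gx: (dc 2 1 x) => [x''|]; last by rewrite [LHS]RH // -!dc_none gx /= ?orbT.
all: case gy: (dc 2 1 y) => [y''|]; last by rewrite [LHS]RH // -!dc_none gy /= ?orbT.
all: case gz: (dc 2 1 z) => [z''|]; last by rewrite [LHS]RH // -!dc_none gz /= ?orbT.
all: rewrite (dc_some gx) (dc_some gy) (dc_some gz) (Hb_mapG cEc W _ _ _ e2 l2); apply: RH.
all: by rewrite ?(Lnew ex gx) ?(Lnew ey gy) ?(Lnew ez gz) ?orbT.
Qed.

Lemma compfg x : gG (fF x) = fF' x.
Proof.
case: x => [a|[j w]].
  by congr inl; apply: val_inj => /=; rewrite sgc.
rewrite /gG /fF /fF' /=; congr (inr (existT _ _ _)).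
change (mapw 3 2 1 cEc (mapw 2 1 1 cEf (w : wdata 1 j)) = mapw 3 1 2 cEc (w : wdata 1 j)).
apply: wdata_ext => [x y|x y|x y z]; [exact: compE|exact: compL|exact: compH].
Qed.

Definition tau : wdata 1 0 :=
  mkw 1 0 (fun x y => (x == 0) && (y == 1)) (fun x y => (x == 0) && (y == 1)) (fun _ _ _ => false).
Definition taum := mapw 2 1 1 cEf tau.

Lemma dc110 : dc 1 1 0 = Some 0. Proof. by []. Qed.
Lemma dc111 : dc 1 1 1 = None. Proof. by []. Qed.
Lemma dc112 : dc 1 1 2 = Some 1. Proof. by []. Qed.

Lemma tauE x y : Eb taum x y = [&& x < 3, y < 3, adm 2 [:: x; y] & (x == 0) && (y == 2)].
Proof.
rewrite /taum Eb_mkw.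
change (2 + 0.+1) with 3.
case: (ltnP x 3) => hx //=.
case: (ltnP y 3) => hy //=.
case: x hx => [|[|[|//]]] _; case: y hy => [|[|[|//]]] _;
  rewrite ?dc110 ?dc111 ?dc112 /= ?Eb_mkw; reflexivity.
Qed.
Lemma tauL x y : Lb taum x y = [&& x < 3, y < 3, adm 2 [:: x; y] & ((x == 0) || (x == 1)) && (y == 2)].
Proof.
rewrite /taum Lb_mkw.
change (2 + 0.+1) with 3.
case: (ltnP x 3) => hx //=.
case: (ltnP y 3) => hy //=.
case: x hx => [|[|[|//]]] _; case: y hy => [|[|[|//]]] _;
  rewrite ?dc110 ?dc111 ?dc112 /= ?Lb_mkw; reflexivity.
Qed.
Lemma tauH x y z : Hb taum x y z = false.
Proof.
rewrite /taum Hb_mkw.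
case ex: (dc 1 1 x) => [x'|]; case ey: (dc 1 1 y) => [y'|]; case ez: (dc 1 1 z) => [z'|];
  by rewrite ?andbF // Hb_mkw !andbF.
Qed.

Definition A2 : estr := EStr (Some 4) (fun x y => (x == 0) && ((y == 2) || (y == 3)))
  (fun x y z => [&& x == 1, y == 2 & z == 3]).

Lemma KA2 : Kclass A2.
Proof.
case=> m [_ hinj hE _].
have f k : FE 1 k -> m k = 2 \/ m k = 3.
  by move=> /hE [_ _ /= /andP[_ /orP[] /eqP ->]]; [left|right].
have h0 := f 0 (or_introl (conj erefl erefl)).
have h2 := f 2 (or_intror (or_introl (conj erefl erefl))).
have h3 := f 3 (or_intror (or_intror (conj erefl erefl))).
have n02 : m 0 <> m 2 by move/hinj => /(_ erefl erefl).
have n03 : m 0 <> m 3 by move/hinj => /(_ erefl erefl).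
have n23 : m 2 <> m 3 by move/hinj => /(_ erefl erefl).
lia.
Qed.

Lemma iniA2 : initseg_of B0 A2.
Proof.
split => /=.
- by move=> x hx; rewrite /dom /=; lia.
- by move=> x y hx hy; split => // /andP[_ /orP[] /eqP e]; lia.
- by move=> x y z hx hy hz; split => // /and3P[_ /eqP e _]; lia.
Qed.

Lemma relEA2 a b : relE A2 a b <-> [&& a < 4, b < 4 & (a == 0) && ((b == 2) || (b == 3))].
Proof. by split => [[h1 h2 h3]|/and3P[h1 h2 h3]]; [apply/and3P|]. Qed.
Lemma relLA2 a b : relL A2 a b <-> [&& a < 4, b < 4 & a <= b].
Proof. by split => [[h1 h2 h3]|/and3P[h1 h2 h3]]; [apply/and3P|]. Qed.
Lemma relHA2 a b c : relH A2 a b c <-> [&& a < 4, b < 4, c < 4 & [&& a == 1, b == 2 & c == 3]].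
Proof. by split => [[h1 h2 h3 h4]|/and4P[h1 h2 h3 h4]]; [apply/and4P|]. Qed.

Lemma val_inord n c : c <= n -> val (@inord n c) = c.
Proof. exact: inordK. Qed.

Theorem proposition2 : ~ tr_amalgamation Kclass.
Proof.
move=> H.
have hE' : forall x y, x < fn B0 -> y < fn B0 -> (fE B1 x y <-> fE B0 x y).
  by move=> x y hx hy /=; split => // -[ex _]; move: hx; rewrite ex.
have hH' : forall x y z, x < fn B0 -> y < fn B0 -> z < fn B0 -> (fH B1 x y z <-> fH B0 x y z) by [].
have [g' [[embg' clg'] comp fixb]] :=
  H A0 B0 B1 KA0 KB0 KB1 erefl hE' hH' fF fF' gG Kf Kf' Kg fixg compfg.
have [B3 [g3 [KB3 iniB3 [embg3 _] basecl covcl]]] := clg' A2 KA2 iniA2.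
case: embg3 => hd3 hinj3 hL3 hE3 hH3.
case: iniB3 => hdB3 hEB3 hHB3.
have gb : forall b : 'I_2, g3 b = b.
  move=> b; case: (basecl b) => b1 [e1 e2]; case: (fixb b) => b2 [e1' e2'].
  rewrite e1 in e1'; case: e1' => eb; by rewrite e2 eb e2'.
have g30 : g3 0 = 0 := gb (@Ordinal 2 0 erefl).
have g31 : g3 1 = 1 := gb (@Ordinal 2 1 erefl).
have d0 : dom A2 0 by []. have d1 : dom A2 1 by [].
have key : forall z, z = 2 \/ z = 3 -> 3 <= g3 z /\ relE B3 2 (g3 z).
  move=> z hz.
  have dz : dom A2 z by rewrite /dom /=; lia.
  have ge3 : 3 <= g3 z.
    have l1 : relL A2 1 z by split => //; lia.
    have [_ _ h1] := (hL3 1 z d1 dz).1 l1; rewrite g31 in h1.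
    have n1 : g3 z <> 1 by rewrite -g31 => /hinj3 => /(_ dz d1); lia.
    have e0 : relE A2 0 z by apply/relEA2; case: hz => ->.
    have [_ _ h0] := (hE3 0 z d0 dz).1 e0; rewrite g30 in h0.
    have n2 : g3 z <> 2.
      by move=> e; rewrite e in h0; case: ((hEB3 0 2 erefl erefl).1 h0).
    lia.
  set as_ := [:: g3 z].
  have tii : tuple_in_image A2 B3 g3 (fn B1) as_.
    split => // a; rewrite inE => /eqP ->; split => //; by exists z.
  set N : nodes (fn B1) := existT _ 0 (typeW B3 3 as_).
  have htn : typeNode B3 (fn B1) as_ N := @typeW_node B3 3 as_ erefl.
  have [y hyN] := covcl as_ tii N htn.
  case: y hyN => [b|[k w]] hyN.
    by case: (fixb b) => b' [e _]; rewrite e in hyN.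
  case: embg' => ginj [hEg hLg hHg hpf _].
  have k0 : k = 0.
    case: k w hyN => // k w hyN; exfalso.
    have pfMR : pf (inr (existT _ k.+1 w) : pcar B0) (inr (existT _ k (restr w))).
      by right; split => //; apply: agree_restr.
    have := hpf _ _ pfMR; rewrite hyN /=.
    case e: (g' (inr (existT _ k (restr w)))) => [r|R'] //.
    rewrite /pf /=; case=> [[_ eR]|[h _]] //.
    subst R'; rewrite -hyN in e; have := ginj _ _ e.
    by move/(congr1 (fun t : pcar B0 => if t is inr M then projT1 M else 0)) => /=; lia.
  subst k.
  pose io : nat -> pcar B0 := fun c => if c < 2 then inl (inord c) else inr (existT _ 0 w).
  pose io' : nat -> pcar B1 := fun c => if c < 3 then inl (inord c) else inr N.
  have hio1 : forall c, c < fn B0 -> exists a : 'I_(fn B0), io c = inl a /\ val a = c.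
    move=> c hc; exists (inord c); split; first by rewrite /io hc.
    by rewrite val_inord.
  have hio2 : io (fn B0) = inr (existT _ 0 w) by rewrite /io ltnn.
  have [nr0 nr0H] := node_rel hio1 hio2.
  have hio1' : forall c, c < fn B1 -> exists a : 'I_(fn B1), io' c = inl a /\ val a = c.
    move=> c hc; exists (inord c); split; first by rewrite /io' hc.
    by rewrite val_inord.
  have hio2' : io' (fn B1) = inr N by rewrite /io' ltnn.
  have [nr1 nr1H] := node_rel hio1' hio2'.
  have gio : forall c, c < 3 -> g' (io c) = io' (sg 2 1 c).
    move=> c hc; case: (ltnP c 2) => h2.
      rewrite /io /io' h2 sg_small // (ltn_trans h2 (ltnSn 2)).
      case: (fixb (inord c)) => b' [-> eb']; congr inl; apply: val_inj.
      by rewrite eb' !val_inord //; lia.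
    have -> : c = 2 by lia.
    have -> : sg 2 1 2 = 3 by [].
    by rewrite /io /io' !ltnn.

  pose ze c := if c < 2 then c else z.
  have tm : forall c, c < 3 -> tmap 3 as_ (sg 2 1 c) = g3 (ze c).
    move=> c hc; case: (ltnP c 2) => h2.
      rewrite sg_small // tmap_lt; last lia.
      by rewrite /ze h2 (gb (Ordinal h2)).
    have -> : c = 2 by lia.
    by rewrite /ze /= -[sg 2 1 2]/3 tmap_l.
  have dze : forall c, dom A2 (ze c) by move=> c; rewrite /ze /dom /=; case: ifP; lia.
  have sgb : forall c, c < 3 -> sg 2 1 c < 3 + 0.+1 by move=> c; rewrite /sg; case: ifP; lia.
  have sga : forall x y, adm 2 [:: x; y] -> adm 3 [:: sg 2 1 x; sg 2 1 y].
    by move=> x y ha; rewrite -[3]/(2 + 1) adm2_sg.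
  have sga3 : forall x y z', adm 2 [:: x; y; z'] -> adm 3 [:: sg 2 1 x; sg 2 1 y; sg 2 1 z'].
    by move=> x y z' ha; rewrite -[3]/(2 + 1) adm3_sg.
  have hEw : forall x y, x < 3 -> y < 3 -> adm 2 [:: x; y] -> (Eb w x y <-> relE A2 (ze x) (ze y)).
    move=> x y hx hy ha.
    apply: iff_trans (iff_sym (nr0 x y hx hy ha).1) _.
    apply: iff_trans (hEg (io x) (io y)) _.
    rewrite (gio x hx) (gio y hy).
    apply: iff_trans ((nr1 _ _ (sgb x hx) (sgb y hy) (sga x y ha)).1) _.
    rewrite Eb_mkw (sgb x hx) (sgb y hy) (sga x y ha) /=.
    apply: iff_trans (pbP _) _.
    rewrite (tm x hx) (tm y hy).
    exact: iff_sym (hE3 _ _ (dze x) (dze y)).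
  have hLw : forall x y, x < 3 -> y < 3 -> adm 2 [:: x; y] -> (Lb w x y <-> relL A2 (ze x) (ze y)).
    move=> x y hx hy ha.
    apply: iff_trans (iff_sym (nr0 x y hx hy ha).2) _.
    apply: iff_trans (hLg (io x) (io y)) _.
    rewrite (gio x hx) (gio y hy).
    apply: iff_trans ((nr1 _ _ (sgb x hx) (sgb y hy) (sga x y ha)).2) _.
    rewrite Lb_mkw (sgb x hx) (sgb y hy) (sga x y ha) /=.
    apply: iff_trans (pbP _) _.
    rewrite (tm x hx) (tm y hy).
    exact: iff_sym (hL3 _ _ (dze x) (dze y)).
  have hHw : forall x y z', x < 3 -> y < 3 -> z' < 3 -> adm 2 [:: x; y; z'] ->
      (Hb w x y z' <-> relH A2 (ze x) (ze y) (ze z')).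
    move=> x y z' hx hy hz' ha.
    apply: iff_trans (iff_sym (nr0H x y z' hx hy hz' ha)) _.
    apply: iff_trans (hHg (io x) (io y) (io z')) _.
    rewrite (gio x hx) (gio y hy) (gio z' hz').
    apply: iff_trans (nr1H _ _ _ (sgb x hx) (sgb y hy) (sgb z' hz') (sga3 x y z' ha)) _.
    rewrite Hb_mkw (sgb x hx) (sgb y hy) (sgb z' hz') (sga3 x y z' ha) /=.
    apply: iff_trans (pbP _) _.
    rewrite (tm x hx) (tm y hy) (tm z' hz').
    exact: iff_sym (hH3 _ _ _ (dze x) (dze y) (dze z')).
  have ew : w = taum.
    apply: wdata_ext => [x y|x y|x y z'].
    - case: (boolP [&& x < 3, y < 3 & adm 2 [:: x; y]]) => hb.
        move/and3P: hb => [hx hy ha]; apply/beqP; apply: iff_trans (hEw x y hx hy ha) _.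
        apply: iff_trans (relEA2 _ _) _; rewrite tauE hx hy ha /=; apply/beqP.
        case: hz => ez; subst z; case: x hx ha => [|[|[|//]]] _;
          case: y hy => [|[|[|//]]] _ ha; (reflexivity || (exfalso; move: ha; vm_compute; move=> ha; discriminate ha)).
      rewrite (Eb_out w (hb : ~~ [&& x < 2 + 0.+1, y < 2 + 0.+1 & adm 2 [:: x; y]])).
      apply/esym/negbTE; rewrite tauE; apply: contra hb; by case/and4P => -> -> ->.
    - case: (boolP [&& x < 3, y < 3 & adm 2 [:: x; y]]) => hb.
        move/and3P: hb => [hx hy ha]; apply/beqP; apply: iff_trans (hLw x y hx hy ha) _.
        apply: iff_trans (relLA2 _ _) _; rewrite tauL hx hy ha /=; apply/beqP.
        case: hz => ez; subst z; case: x hx ha => [|[|[|//]]] _;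
          case: y hy => [|[|[|//]]] _ ha; (reflexivity || (exfalso; move: ha; vm_compute; move=> ha; discriminate ha)).
      rewrite (Lb_out w (hb : ~~ [&& x < 2 + 0.+1, y < 2 + 0.+1 & adm 2 [:: x; y]])).
      apply/esym/negbTE; rewrite tauL; apply: contra hb; by case/and4P => -> -> ->.
    - rewrite tauH; apply/negbTE/negP => h.
      have /and4P[hx hy hz' ha] := Hb_adm h.
      have := (hHw x y z' hx hy hz' ha).1 h.
      move/relHA2 => /and4P[_ _ _ /and3P[_ /eqP e2 /eqP e3]].
      move: e2 e3; rewrite /ze; case: (ltnP y 2) => ? /=; case: (ltnP z' 2) => ? /=; lia.
  have e := comp (inr (existT _ 0 tau)).
  change (g' (inr (existT _ 0 taum)) = inr (existT _ 0 (mapw 3 1 2 cEc tau))) in e.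
  rewrite -ew hyN in e.
  have e1 := Some_inj (congr1 (fun t : pcar B1 => if t is inr M then Some M else None) e).
  have eT := inj_pair2_eq_dec _ Nat.eq_dec _ _ _ _ e1.
  have hb : Eb (typeW B3 3 as_) 2 3.
    rewrite eT (R1 _ _ (erefl : 1 + 2 = 3) (leqnn 1) (erefl : isnew 1 2 2)) /tau Eb_mkw.
    reflexivity.
  split => //.
  move: hb; rewrite Eb_mkw => /and4P[_ _ _ /pbP].
  by rewrite tmap_lt // tmap_l.
have [g2 E2] := key 2 (or_introl erefl).
have [g33 E3] := key 3 (or_intror erefl).
have d2 : dom A2 2 by []. have d3 : dom A2 3 by [].
have E21 : relE B3 2 1.
  by split; [exact: (hdB3 2 erefl)|exact: (hdB3 1 erefl)|exact: ((hEB3 2 1 erefl erefl).2 (conj erefl erefl))].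
have H123 : relH B3 1 (g3 2) (g3 3).
  by have := (hH3 1 2 3 d1 d2 d3).1 (And4 d1 d2 d3 erefl); rewrite g31.
have n23 : g3 2 != g3 3 by apply/eqP => /hinj3 => /(_ d2 d3).
apply: KB3; apply: (@mkmono B3 1 2 (g3 2) (g3 3)) => //; apply/eqP; lia.
Qed.
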